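(* Let $n\in(-1,1)$ and let $\mathcal{S}$ be a $C^2$-smooth rotationally symmetric, strictly convex sphere (i.e. $\mathcal{S}\in\mathscr{W}$) whose astigmatism satisfies $s/\sin^{n+2}\theta\in L^2_{\sin\theta}(0,\pi)$. Then, with coefficients $\gamma_{m,n}$ such that $$s=\gamma_{0,n}\sin^{2n+2}\theta+\sin^{n+2}\theta\sum_{m=1}^\infty\gamma_{m,n}\mathrm{P}^{-n}_{n+m}(\cos\theta)$$ (equality in $L^2_{\sin\theta}(0,\pi)$ after division by $\sin^{n+2}\theta$), the following hold pointwise: $$r_1=C_1+\frac{\gamma_{0,n}}{2(n+1)}\sin^{2n+2}\theta+\sin^{n+2}\theta\sum_{m=1}^\infty\gamma_{m,n}\left\{\mathrm{P}^{-(n+2)}_{n+m}(\cos\theta)+\cot\theta\,\mathrm{P}^{-(n+1)}_{n+m}(\cos\theta)\right\},$$ $$r=C_2\cos\theta+C_1+\gamma_{0,n}\left[\frac{\sin^{2n+2}\theta}{2(n+1)}-\cos\theta\int_0^\theta\sin^{2n+1}\vartheta\,d\vartheta\right]+\sin^{n+2}\theta\sum_{m=1}^\infty\gamma_{m,n}\mathrm{P}^{-(n+2)}_{n+m}(\cos\theta),$$ where $C_1=r_1(0)$ and $C_2=r(0)-r_1(0)$.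
   Context: $\mathscr{W}$ is the set of embedded $C^2$-smooth topological 2-spheres in $\mathbb{R}^3$ that are rotationally symmetric and strictly convex, parametrised by the inverse Gauss map with $\theta\in[0,\pi]$ the angle between the outward normal and the symmetry axis; with support function $r=\vec X\cdot\hat n$, radii of curvature $r_1=\frac{\cos^2\theta}{\sin\theta}\frac{d}{d\theta}(r/\cos\theta)$, $r_2=r''+r$, and astigmatism $s=r_2-r_1$. $\mathrm{P}^\mu_\nu$ denotes the (Ferrers) associated Legendre function of the first kind. $L^2_{\sin\theta}(0,\pi)$: complex-valued functions square integrable w.r.t. $\sin\theta\,d\theta$. The functions $\{\mathrm{P}^{-n}_{n+m}(\cos\theta)\}_{m\ge0}$ (with $\mathrm{P}^{-n}_n(\cos\theta)\propto\sin^n\theta$) form an orthogonal basis of $L^2_{\sin\theta}(0,\pi)$ for $n\in(-1,1)$. *)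

(* Defs.v *)
From Stdlib Require Import Reals Factorial.
From Coquelicot Require Import Coquelicot.
Open Scope R_scope.

(** Euler's Gamma function, for x > 0: Γ(x) = ∫_0^∞ t^(x-1) e^(-t) dt
    (improper Riemann integral; only used at arguments x > 0). *)
Definition Gamma (x : R) : R :=
  RInt_gen (fun t => Rpower t (x - 1) * exp (- t)) (at_right 0) (Rbar_locally p_infty).

Fixpoint poch (a : R) (k : nat) : R :=
  match k with
  | O => 1
  | S k' => poch a k' * (a + INR k')
  end.

(** Olver's regularized hypergeometric function
    F(a,b;c;z) = Σ_k (a)_k (b)_k / (Γ(c+k) k!) z^k   (used for c > 0, |z| < 1). *)
Definition hyp2F1_reg (a b c z : R) : R :=
  Series (fun k => poch a k * poch b k / (Gamma (c + INR k) * INR (fact k)) * z ^ k).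

(** Ferrers associated Legendre function of the first kind (DLMF 14.3.1):
    P^mu_nu(x) = ((1+x)/(1-x))^(mu/2) F(-nu, nu+1; 1-mu; (1-x)/2),  -1 < x < 1.
    (Used here only with mu = -n, -(n+1), -(n+2), n > -1, so 1 - mu > 0.) *)
Definition FerrersP (mu nu x : R) : R :=
  Rpower ((1 + x) / (1 - x)) (mu / 2) * hyp2F1_reg (- nu) (nu + 1) (1 - mu) ((1 - x) / 2).

Definition sinp (a t : R) : R := Rpower (sin t) a.

Definition cot (t : R) : R := cos t / sin t.

Definition D2 (r : R -> R) : R -> R := Derive (Derive r).

(** Radii of curvature of the surface with support function r(θ).
    r1 = cos^2θ/sinθ · d/dθ (r / cosθ) = r + r' cot θ for sin θ ≠ 0 (this is
    the formula of the paper with the removable singularity at θ = π/2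
    cancelled); at the poles (sin θ = 0) r1 is given its continuous value
    r + r'' (= r2 there, since r'(0) = r'(π) = 0). *)
Definition r1 (r : R -> R) (t : R) : R :=
  if Req_EM_T (sin t) 0 then r t + D2 r t else r t + Derive r t * cot t.

Definition r2 (r : R -> R) (t : R) : R := D2 r t + r t.

Definition astig (r : R -> R) (t : R) : R := r2 r t - r1 r t.

(** Membership in 𝒲, expressed through the support function r(θ) of the
    inverse-Gauss-map parametrisation.  r is the support function restricted
    to a meridian great circle of normals n(θ) = (sin θ, 0, cos θ), θ ∈ R:
    - C^2 smoothness: r is C^2 on R;
    - rotational symmetry / closedness: r is even and 2π-periodic;
    - strict convexity: both radii of curvature are positive on [0, π]. *)
Definition in_W (r : R -> R) : Prop :=
  (forall t, ex_derive r t) /\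
  (forall t, ex_derive (Derive r) t) /\
  (forall t, continuous (D2 r) t) /\
  (forall t, r (- t) = r t) /\
  (forall t, r (t + 2 * PI) = r t) /\
  (forall t, 0 <= t <= PI -> 0 < r1 r t /\ 0 < r2 r t).

(** f ∈ L^2_{sinθ}(0,π) for f continuous on (0,π): ∫_0^π f^2 sinθ dθ < ∞
    (improper Riemann integral of a nonnegative continuous integrand, which
    coincides with the Lebesgue integral). *)
Definition L2sin (f : R -> R) : Prop :=
  ex_RInt_gen (fun t => (f t) ^ 2 * sin t) (at_right 0) (at_left PI).

Definition L2sin_lim (g : nat -> R -> R) (f : R -> R) : Prop :=
  forall eps : R, 0 < eps -> exists N : nat, forall M : nat, (N <= M)%nat ->
    exists l : R,
      is_RInt_gen (fun t => (f t - g M t) ^ 2 * sin t) (at_right 0) (at_left PI) l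
      /\ l <= eps.

(* Main.v *)
Require Import Defs.
From Stdlib Require Import Reals Lra Lia Factorial ZArith.
From Coquelicot Require Import Coquelicot.
Open Scope R_scope.

Lemma ball_R (x e y : R) : ball x e y <-> Rabs (y - x) < e.
Proof. reflexivity. Qed.

Lemma exRc (f : R -> R) (a b : R) :
  (forall z, Rmin a b <= z <= Rmax a b -> continuous f z) -> ex_RInt f a b.
Proof. intros H. apply (ex_RInt_continuous (V := R_CompleteNormedModule)). exact H. Qed.

Lemma ar_prod (t : R) (Q : R -> R -> Prop) : 0 < t ->
  (forall a, 0 < a < t -> Q a t) ->
  filter_prod (at_right 0) (at_point t) (fun ab => Q (fst ab) (snd ab)).
Proof.
  intros Ht HQ.
  apply Filter_prod with (fun a => 0 < a < t) (fun b => b = t).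
  - exists (mkposreal t Ht). intros y Hy Hy0. rewrite ball_R in Hy. simpl in Hy.
    split; auto. rewrite Rminus_0_r in Hy. apply Rabs_def2 in Hy. lra.
  - reflexivity.
  - intros x y Hx Hy. subst. simpl. now apply HQ.
Qed.

Lemma gen_le (Fa Fb : (R -> Prop) -> Prop) (FFa : ProperFilter Fa) (FFb : ProperFilter Fb)
  (f : R -> R) (L B : R) :
  is_RInt_gen f Fa Fb L ->
  filter_prod Fa Fb (fun ab => forall I, is_RInt f (fst ab) (snd ab) I -> I <= B) ->
  L <= B.
Proof.
  intros HI HB. destruct (Rle_dec L B) as [|Hn]; auto. exfalso.
  assert (He : 0 < L - B) by lra.
  assert (H1 := HI (fun y => Rabs (y - L) < L - B) (locally_ball L (mkposreal _ He))).
  unfold filtermapi in H1.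
  assert (Hp : ProperFilter' (filter_prod Fa Fb)).
  { apply filter_prod_proper'; apply Proper_StrongProper; auto. }
  apply (filter_not_empty (F := filter_prod Fa Fb)).
  generalize (filter_and _ _ H1 HB). apply filter_imp.
  intros x [[y [Hy1 Hy2]] H2]. specialize (H2 y Hy1). apply Rabs_def2 in Hy2. lra.
Qed.

Lemma gen_ge (Fa Fb : (R -> Prop) -> Prop) (FFa : ProperFilter Fa) (FFb : ProperFilter Fb)
  (f : R -> R) (L B : R) :
  is_RInt_gen f Fa Fb L ->
  filter_prod Fa Fb (fun ab => forall I, is_RInt f (fst ab) (snd ab) I -> B <= I) ->
  B <= L.
Proof.
  intros HI HB. destruct (Rle_dec B L) as [|Hn]; auto. exfalso.
  assert (He : 0 < B - L) by lra.
  assert (H1 := HI (fun y => Rabs (y - L) < B - L) (locally_ball L (mkposreal _ He))).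
  unfold filtermapi in H1.
  assert (Hp : ProperFilter' (filter_prod Fa Fb)).
  { apply filter_prod_proper'; apply Proper_StrongProper; auto. }
  apply (filter_not_empty (F := filter_prod Fa Fb)).
  generalize (filter_and _ _ H1 HB). apply filter_imp.
  intros x [[y [Hy1 Hy2]] H2]. specialize (H2 y Hy1). apply Rabs_def2 in Hy2. lra.
Qed.

Lemma between (u v T x : R) : Rmin u v <= x <= Rmax u v ->
  (Rmin u T <= x <= Rmax u T) \/ (Rmin v T <= x <= Rmax v T).
Proof.
  intros [H1 H2]. unfold Rmin, Rmax in *.
  destruct (Rle_dec u v); destruct (Rle_dec u T); destruct (Rle_dec v T);
  (destruct (Rle_dec x T); [idtac|idtac]); try (left; lra); try (right; lra).
Qed.

Lemma dom_gen (Fa : (R -> Prop) -> Prop) (FF : ProperFilter Fa) (h g G : R -> R) (T lG : R) :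
  Fa (fun a => forall x, Rmin a T <= x <= Rmax a T ->
        (0 <= h x <= g x) /\ is_derive G x (g x) /\ continuous h x /\ continuous g x) ->
  filterlim G Fa (locally lG) ->
  exists L, is_RInt_gen h Fa (at_point T) L.
Proof.
  intros HP HG.
  set (P := fun a : R => forall x, Rmin a T <= x <= Rmax a T ->
        (0 <= h x <= g x) /\ is_derive G x (g x) /\ continuous h x /\ continuous g x) in *.
  assert (exRI : forall a, P a -> ex_RInt h a T).
  { intros a Ha. apply exRc. intros z Hz. apply (Ha z Hz). }
  assert (Hc : exists L, filterlim (fun a => RInt h a T) Fa (locally L)).
  { apply (filterlim_locally_cauchy (F := Fa)). intros eps.
    assert (Hbb : Fa (fun a => Rabs (G a - lG) < eps / 2)).
    { assert (He2 : 0 < eps / 2) by (destruct eps; simpl; lra).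
      apply (HG (fun y => Rabs (y - lG) < eps/2)). exists (mkposreal _ He2). intros y Hy. exact Hy. }
    exists (fun a => P a /\ Rabs (G a - lG) < eps / 2). split.
    { now apply filter_and. }
    intros u v [Pu Gu] [Pv Gv]. rewrite ball_R. simpl.
    assert (Hin : forall x, Rmin u v <= x <= Rmax u v ->
        (0 <= h x <= g x) /\ is_derive G x (g x) /\ continuous h x /\ continuous g x).
    { intros x Hx. destruct (between u v T x Hx) as [Hx'|Hx']; [apply Pu|apply Pv]; auto. }
    assert (Huv : ex_RInt h u v).
    { apply exRc. intros z Hz. apply (Hin z Hz). }
    assert (Hch : RInt h u T = RInt h u v + RInt h v T).
    { symmetry. apply (RInt_Chasles h u v T Huv (exRI v Pv)). }
    rewrite Hch.
    replace (RInt h v T - (RInt h u v + RInt h v T)) with (- RInt h u v) by ring.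
    rewrite Rabs_Ropp.
    assert (Hgint : forall a b, Rmin u v <= a -> b <= Rmax u v -> a <= b ->
               RInt g a b = G b - G a).
    { intros a b Ha Hb Hab. apply is_RInt_unique.
      apply (is_RInt_derive G g a b).
      - intros x Hx. apply Hin. unfold Rmin, Rmax in *. destruct (Rle_dec a b); lra.
      - intros x Hx. apply Hin. unfold Rmin, Rmax in *. destruct (Rle_dec a b); lra. }
    assert (Hbound : forall a b, Rmin u v = a -> b = Rmax u v -> Rabs (RInt h a b) <= Rabs (G b - G a)).
    { intros a b Ha Hb.
      assert (Hab : a <= b) by (subst; apply Rmin_Rmax).
      assert (exh : ex_RInt h a b).
      { apply exRc. intros z Hz. apply Hin. subst. rewrite Rmin_left in Hz by exact Hab.
        rewrite Rmax_right in Hz by exact Hab. exact Hz. }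
      assert (exg : ex_RInt g a b).
      { apply exRc. intros z Hz. apply Hin. subst. rewrite Rmin_left in Hz by exact Hab.
        rewrite Rmax_right in Hz by exact Hab. exact Hz. }
      assert (H0 : 0 <= RInt h a b).
      { apply RInt_ge_0; auto. intros x Hx. apply Hin. subst. lra. }
      assert (H1 : RInt h a b <= RInt g a b).
      { apply RInt_le; auto. intros x Hx. apply Hin. subst. lra. }
      rewrite (Hgint a b) in H1 by (subst; lra).
      rewrite Rabs_pos_eq by lra. rewrite Rabs_pos_eq by lra. lra. }
    unfold Rmin, Rmax in Hbound. destruct (Rle_dec u v).
    - specialize (Hbound u v eq_refl eq_refl).
      eapply Rle_lt_trans. exact Hbound.
      replace (G v - G u) with ((G v - lG) - (G u - lG)) by ring.
      eapply Rle_lt_trans. apply Rabs_triang. rewrite Rabs_Ropp. lra.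
    - specialize (Hbound v u eq_refl eq_refl).
      rewrite <- (opp_RInt_swap h) by (apply ex_RInt_swap; exact Huv).
      change (Rabs (opp (RInt h v u)) < eps). unfold opp; simpl. rewrite Rabs_Ropp.
      eapply Rle_lt_trans. exact Hbound.
      replace (G u - G v) with ((G u - lG) - (G v - lG)) by ring.
      eapply Rle_lt_trans. apply Rabs_triang. rewrite Rabs_Ropp. lra. }
  destruct Hc as [L HL]. exists L.
  intros S HS. specialize (HL S HS).
  apply Filter_prod with (fun a => P a /\ S (RInt h a T)) (fun b => b = T).
  - now apply filter_and.
  - reflexivity.
  - intros x y [Hx1 Hx2] Hy. subst. simpl. exists (RInt h x T). split; auto.
    apply (RInt_correct (V := R_CompleteNormedModule)). now apply exRI.
Qed.

Lemma Rpow_pos x a : 0 < Rpower x a.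
Proof. unfold Rpower. apply exp_pos. Qed.

Lemma is_derive_Rpow x a : 0 < x -> is_derive (fun u => Rpower u a) x (a * Rpower x (a-1)).
Proof. intros Hx. apply is_derive_Reals. now apply derivable_pt_lim_power. Qed.

Lemma exd_cont (f : R -> R) x : ex_derive f x -> continuous f x.
Proof. intros H. apply (ex_derive_continuous (K := R_AbsRing) (V := R_NormedModule)). exact H. Qed.

Lemma cont_Rpow x a : 0 < x -> continuous (fun u => Rpower u a) x.
Proof. intros Hx. apply exd_cont. eexists. now apply is_derive_Rpow. Qed.

Lemma Rpow_lt_base x y a : 0 < a -> 0 < x < y -> Rpower x a < Rpower y a.
Proof.
  intros Ha [Hx Hxy]. unfold Rpower. apply exp_increasing.
  apply Rmult_lt_compat_l; auto. apply ln_increasing; auto.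
Qed.

Lemma Rpow_le_base x y a : 0 <= a -> 0 < x <= y -> Rpower x a <= Rpower y a.
Proof.
  intros Ha [Hx Hxy]. destruct Ha as [Ha|Ha].
  - destruct Hxy as [Hxy|Hxy]. left. apply Rpow_lt_base; auto. subst; lra.
  - subst. unfold Rpower. rewrite !Rmult_0_l. lra.
Qed.

Lemma Rpow_le1 x a : 0 < x <= 1 -> 0 <= a -> Rpower x a <= 1.
Proof.
  intros Hx Ha. unfold Rpower.
  assert (ln x <= 0).
  { destruct (Req_dec x 1). subst. rewrite ln_1. lra. left. rewrite <- ln_1. apply ln_increasing; lra. }
  rewrite <- exp_0. destruct (Req_dec (a * ln x) 0) as [E|E]. rewrite E; lra.
  left. apply exp_increasing. assert (a * ln x <= 0). { apply Rmult_le_0_l; lra. } lra.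
Qed.

Lemma Rpower_lim0 a : 0 < a -> filterlim (fun u => Rpower u a) (at_right 0) (locally 0).
Proof.
  intros Ha P [eps HP].
  exists (mkposreal _ (Rpow_pos eps (/ a))). intros y Hy Hy0.
  apply HP. change (Rabs (Rpower y a - 0) < eps). rewrite Rminus_0_r.
  change (Rabs (y - 0) < Rpower eps (/a)) in Hy. rewrite Rminus_0_r in Hy.
  rewrite Rabs_pos_eq in Hy by lra. rewrite Rabs_pos_eq by (left; apply Rpow_pos).
  replace (pos eps) with (Rpower (Rpower eps (/a)) a).
  - apply Rpow_lt_base; auto.
  - rewrite Rpower_mult. rewrite Rinv_l by lra. apply Rpower_1. apply cond_pos.
Qed.

Lemma squeeze0 (T : Type) (F : (T -> Prop) -> Prop) (FF : Filter F) (f g : T -> R) :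
  filterlim g F (locally 0) -> F (fun x => Rabs (f x) <= g x) -> filterlim f F (locally 0).
Proof.
  intros Hg Hb P [eps HP].
  assert (H1 := Hg (fun y => Rabs (y - 0) < eps) (locally_ball 0 eps)).
  unfold filtermap in *. generalize (filter_and _ _ H1 Hb). apply filter_imp.
  intros x [H2 H3]. apply HP. change (Rabs (f x - 0) < eps). rewrite Rminus_0_r in *.
  eapply Rle_lt_trans. exact H3. eapply Rle_lt_trans. apply Rle_abs. exact H2.
Qed.

Lemma exp_bound p : exists K, 0 < K /\ forall t, 1 <= t -> Rpower t p <= K * exp (t/2).
Proof.
  set (c := Rabs p + 1).
  assert (Hc : 0 < c) by (unfold c; generalize (Rabs_pos p); lra).
  exists (exp (c * (ln (2 * c) - 1))). split. apply exp_pos.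
  intros t Ht. rewrite <- exp_plus. unfold Rpower.   assert (Hlt : 0 <= ln t).
  { destruct (Req_dec t 1). subst. rewrite ln_1. lra. left. rewrite <- ln_1. apply ln_increasing; lra. }
  assert (Hl : ln t <= t / (2 * c) - 1 + ln (2 * c)).
  { assert (H2c : 0 < 2 * c) by lra.
    replace (ln t) with (ln (t / (2 * c)) + ln (2 * c)).
    - generalize (exp_ineq1_le (ln (t / (2*c)))). rewrite exp_ln.
      + lra.
      + apply Rdiv_lt_0_compat; lra.
    - unfold Rdiv. rewrite ln_mult by (try apply Rinv_0_lt_compat; lra).
      rewrite ln_Rinv by lra. ring. }
  assert (Hpl : p * ln t <= c * ln t).
  { apply Rmult_le_compat_r; auto. unfold c. generalize (Rle_abs p). lra. }
  assert (c * ln t <= c * (ln (2 * c) - 1) + t / 2).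
  { apply Rmult_le_compat_l with (r := c) in Hl; [|lra].
    replace (c * (t / (2 * c) - 1 + ln (2 * c))) with (c * (ln (2 * c) - 1) + t / 2) in Hl
      by (field; lra). exact Hl. }
  destruct (Rle_lt_or_eq_dec _ _ (Rle_trans _ _ _ Hpl H)) as [Hlt2|Heq].
  - left. apply exp_increasing. exact Hlt2.
  - rewrite Heq. lra.
Qed.

Lemma lim0_scal (T : Type) (F : (T -> Prop) -> Prop) {FF : Filter F} (f : T -> R) (c : R) :
  filterlim f F (locally 0) -> filterlim (fun t => c * f t) F (locally 0).
Proof.
  intros Hf P [eps HP].
  assert (Hc : 0 < eps / (Rabs c + 1)).
  { apply Rdiv_lt_0_compat. apply cond_pos. generalize (Rabs_pos c); lra. }
  assert (H1 := Hf (fun y => Rabs (y - 0) < eps / (Rabs c + 1)) (locally_ball 0 (mkposreal _ Hc))).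
  unfold filtermap in *. revert H1. apply filter_imp. intros x Hx. apply HP.
  change (Rabs (c * f x - 0) < eps). rewrite Rminus_0_r in *. rewrite Rabs_mult.
  assert (Rabs c * Rabs (f x) <= (Rabs c + 1) * Rabs (f x)).
  { apply Rmult_le_compat_r. apply Rabs_pos. lra. }
  assert ((Rabs c + 1) * Rabs (f x) < (Rabs c + 1) * (eps / (Rabs c + 1))).
  { apply Rmult_lt_compat_l. generalize (Rabs_pos c); lra. exact Hx. }
  replace ((Rabs c + 1) * (eps / (Rabs c + 1))) with (pos eps) in H0 by (field; generalize (Rabs_pos c); lra).
  lra.
Qed.

Lemma explim : filterlim (fun t => exp (- t / 2)) (Rbar_locally p_infty) (locally 0).
Proof.
  intros P [eps HP]. exists (- 2 * ln eps). intros x Hx. apply HP.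
  change (Rabs (exp (- x / 2) - 0) < eps). rewrite Rminus_0_r.
  rewrite Rabs_pos_eq by (left; apply exp_pos).
  rewrite <- (exp_ln eps) by apply cond_pos. apply exp_increasing. lra.
Qed.

Definition hG (y t : R) := Rpower t (y - 1) * exp (- t).

Lemma cont_hG y x : 0 < x -> continuous (hG y) x.
Proof. intros Hx. apply exd_cont. unfold hG, Rpower. auto_derive. auto. Qed.

Lemma Gamma_exists y : 0 < y -> exists L, is_RInt_gen (hG y) (at_right 0) (Rbar_locally p_infty) L.
Proof.
  intros Hy.
  assert (Hl : exists L1, is_RInt_gen (hG y) (at_right 0) (at_point 1) L1).
  { apply (dom_gen (at_right 0) _ (hG y) (fun t => Rpower t (y - 1)) (fun t => / y * Rpower t y) 1 0).
    - exists (mkposreal 1 Rlt_0_1). intros a Ha Ha0. change (Rabs (a - 0) < 1) in Ha.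
      rewrite Rminus_0_r, Rabs_pos_eq in Ha by lra.
      intros x Hx. rewrite Rmin_left, Rmax_right in Hx by lra.
      assert (Hx0 : 0 < x) by lra.
      split; [|split; [|split]].
      + unfold hG. split.
        * left. apply Rmult_lt_0_compat. apply Rpow_pos. apply exp_pos.
        * rewrite <- (Rmult_1_r (Rpower x (y - 1))) at 2. apply Rmult_le_compat_l.
          left; apply Rpow_pos. rewrite <- exp_0. left. apply exp_increasing. lra.
      + replace (Rpower x (y - 1)) with (/ y * (y * Rpower x (y - 1))) by (field; lra).
        apply is_derive_scal. now apply is_derive_Rpow.
      + now apply cont_hG.
      + now apply cont_Rpow.
    - apply lim0_scal; [apply (@filter_filter _ _ (at_right_proper_filter 0))|].
      now apply Rpower_lim0. }
  destruct (exp_bound (y - 1)) as [K [HK HKb]].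
  assert (Hr : exists L2, is_RInt_gen (hG y) (Rbar_locally p_infty) (at_point 1) L2).
  { apply (dom_gen (Rbar_locally p_infty) _ (hG y) (fun t => K * exp (- t / 2))
       (fun t => - 2 * K * exp (- t / 2)) 1 0).
    - exists 1. intros a Ha x Hx. rewrite Rmin_right, Rmax_left in Hx by lra.
      assert (Hx0 : 0 < x) by lra.
      split; [|split; [|split]].
      + unfold hG. split.
        * left. apply Rmult_lt_0_compat. apply Rpow_pos. apply exp_pos.
        * replace (- x / 2) with (x / 2 + - x) by field. rewrite exp_plus, <- Rmult_assoc.
          apply Rmult_le_compat_r. left; apply exp_pos. apply HKb. lra.
      + auto_derive. auto. unfold Rdiv. field.
      + now apply cont_hG.
      + apply exd_cont. auto_derive. auto.
    - apply (filterlim_ext (fun t => (- 2 * K) * exp (- t / 2))). intros; ring.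
      apply lim0_scal; [apply (@filter_filter _ _ (Rbar_locally_filter p_infty))|].
      apply explim. }
  destruct Hl as [L1 H1]. destruct Hr as [L2 H2].
  exists (plus L1 (opp L2)).
  apply (is_RInt_gen_Chasles (hG y) 1 L1 (opp L2) H1).
  apply (is_RInt_gen_swap (Fa := at_point 1) (Fb := Rbar_locally p_infty)). exact H2.
Qed.

Lemma Gamma_rec y : 0 < y -> Gamma (y + 1) = y * Gamma y.
Proof.
  intros Hy. destruct (Gamma_exists y Hy) as [L HL].
  assert (HFa : ProperFilter' (at_right 0)) by apply Proper_StrongProper, at_right_proper_filter.
  assert (HFb : ProperFilter' (Rbar_locally p_infty)) by apply Proper_StrongProper, Rbar_locally_filter.
  assert (E1 : Gamma y = L).
  { unfold Gamma. apply (is_RInt_gen_unique (V := R_CompleteNormedModule)). exact HL. }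
  rewrite E1. unfold Gamma.
  apply (is_RInt_gen_unique (V := R_CompleteNormedModule)).
  set (Phi := fun t => - (Rpower t y * exp (- t))).
  set (dPhi := fun t => - (y * Rpower t (y - 1) * exp (- t)) + Rpower t y * exp (- t)).
  assert (HdPhi : forall x, 0 < x -> is_derive Phi x (dPhi x)).
  { intros x Hx. unfold Phi, dPhi, Rpower. auto_derive. auto.
    replace (exp ((y - 1) * ln x)) with (exp (y * ln x) * / x).
    field. lra.
    replace ((y - 1) * ln x) with (y * ln x + - ln x) by ring. rewrite exp_plus.
    rewrite exp_Ropp, exp_ln by lra. reflexivity. }
  assert (HPP : filter_prod (at_right 0) (Rbar_locally p_infty) (fun ab => 0 < fst ab /\ 0 < snd ab)).
  { apply Filter_prod with (fun a => 0 < a) (fun b => 0 < b).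
    - exists (mkposreal 1 Rlt_0_1). intros; auto.
    - exists 0. intros; auto.
    - intros; simpl; auto. }
  assert (HD : is_RInt_gen (Derive Phi) (at_right 0) (Rbar_locally p_infty) (0 - 0)).
  { apply is_RInt_gen_Derive.
    - revert HPP. apply filter_imp. intros [a b] [Ha Hb] x Hx. simpl in *.
      assert (0 < x) by (unfold Rmin, Rmax in Hx; destruct (Rle_dec a b); lra).
      eexists. now apply HdPhi.
    - revert HPP. apply filter_imp. intros [a b] [Ha Hb] x Hx. simpl in *.
      assert (Hx0 : 0 < x) by (unfold Rmin, Rmax in Hx; destruct (Rle_dec a b); lra).
      apply continuous_ext_loc with dPhi.
      + assert (Hl : locally x (fun t => 0 < t)).
        { exists (mkposreal x Hx0). intros t Ht. change (Rabs (t - x) < x) in Ht.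
          apply Rabs_def2 in Ht. lra. }
        revert Hl. apply filter_imp. intros t Ht. symmetry. apply is_derive_unique. now apply HdPhi.
      + apply exd_cont. unfold dPhi, Rpower. auto_derive. auto.
    - apply (squeeze0 _ _ (@filter_filter _ _ (at_right_proper_filter 0)) _ (fun t => Rpower t y)).
      + now apply Rpower_lim0.
      + exists (mkposreal 1 Rlt_0_1). intros t _ Ht. unfold Phi.
        rewrite Rabs_Ropp, Rabs_pos_eq by (left; apply Rmult_lt_0_compat; [apply Rpow_pos|apply exp_pos]).
        rewrite <- (Rmult_1_r (Rpower t y)) at 2. apply Rmult_le_compat_l.
        left; apply Rpow_pos. rewrite <- exp_0. left. apply exp_increasing. lra.
    - destruct (exp_bound y) as [K [HK HKb]].
      apply (squeeze0 _ _ (@filter_filter _ _ (Rbar_locally_filter p_infty)) _ (fun t => K * exp (- t / 2))).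
      + apply lim0_scal; [apply (@filter_filter _ _ (Rbar_locally_filter p_infty))|]. apply explim.
      + exists 1. intros t Ht. unfold Phi.
        rewrite Rabs_Ropp, Rabs_pos_eq by (left; apply Rmult_lt_0_compat; [apply Rpow_pos|apply exp_pos]).
        replace (- t / 2) with (t / 2 + - t) by field. rewrite exp_plus, <- Rmult_assoc.
        apply Rmult_le_compat_r. left; apply exp_pos. apply HKb. lra. }
  assert (HS := is_RInt_gen_scal _ y _ HL).
  assert (HP := is_RInt_gen_plus _ _ _ _ HD HS).
  replace (y * L) with (plus (0 - 0) (scal y L)) by (unfold plus, scal; simpl; unfold mult; simpl; ring).
  revert HP. apply is_RInt_gen_ext.
  revert HPP. apply filter_imp. intros [a b] [Ha Hb] x Hx. simpl in *.
  assert (Hx0 : 0 < x) by (unfold Rmin, Rmax in Hx; destruct (Rle_dec a b); lra).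
  rewrite (is_derive_unique _ _ _ (HdPhi x Hx0)).
  unfold plus, scal; simpl; unfold mult; simpl. unfold dPhi, hG.
  replace (y + 1 - 1) with y by ring. ring.
Qed.

Definition coef (c nu : R) (k : nat) : R :=
  poch (- nu) k * poch (nu + 1) k / (Gamma (c + INR k) * INR (fact k)).

Lemma hyp_PS (nu c z : R) : hyp2F1_reg (- nu) (nu + 1) c z = PSeries (coef c nu) z.
Proof.
  unfold hyp2F1_reg, PSeries. apply Series_ext. intros k.
  unfold coef. reflexivity.
Qed.

Lemma coef_S c nu k : 0 < c + INR k ->
  coef c nu (S k) = coef c nu k * ((INR k - nu) * (nu + 1 + INR k) / ((c + INR k) * (INR k + 1))).
Proof.
  intros Hc. unfold coef. simpl poch.
  rewrite S_INR. replace (c + (INR k + 1)) with ((c + INR k) + 1) by ring.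
  rewrite Gamma_rec by auto. rewrite fact_simpl, mult_INR, S_INR.
  unfold Rdiv. rewrite !Rinv_mult. ring.
Qed.

Lemma coef_shift a nu k : 0 < a + INR k -> coef (a + 1) nu k * (a + INR k) = coef a nu k.
Proof.
  intros Ha. unfold coef.
  replace (a + 1 + INR k) with ((a + INR k) + 1) by ring. rewrite Gamma_rec by auto.
  unfold Rdiv. rewrite !Rinv_mult.
  set (P := poch (- nu) k * poch (nu + 1) k). set (G := / Gamma (a + INR k)). set (F := / INR (fact k)).
  transitivity (P * G * F * ((a + INR k) * / (a + INR k))). ring.
  rewrite Rinv_r by lra. ring.
Qed.

Lemma ratlim p q : 0 < q -> is_lim_seq (fun k => (INR k + p) / (INR k + q)) 1.
Proof.
  intros Hq. apply is_lim_seq_spec. intros eps.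
  destruct (archimed (Rabs (p - q) / eps)) as [H1 _].
  assert (Hup : (0 <= up (Rabs (p - q) / eps))%Z).
  { apply le_IZR. assert (0 <= Rabs (p - q) / eps).
    { apply Rdiv_le_0_compat. apply Rabs_pos. apply cond_pos. } lra. }
  exists (Z.to_nat (up (Rabs (p - q) / eps))). intros k Hk.
  apply le_INR in Hk. rewrite INR_IZR_INZ, Z2Nat.id in Hk by auto.
  assert (Hk0 : 0 <= INR k) by apply pos_INR.
  replace ((INR k + p) / (INR k + q) - 1) with ((p - q) / (INR k + q)) by (field; lra).
  unfold Rdiv. rewrite Rabs_mult, Rabs_inv, (Rabs_pos_eq (INR k + q)) by lra.
  apply Rmult_lt_reg_r with (INR k + q). lra.
  rewrite Rmult_assoc, Rinv_l, Rmult_1_r by lra.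
  assert (Rabs (p - q) < eps * INR k + eps * q).
  { assert (Rabs (p - q) / eps < INR k) by lra.
    assert (Hep := cond_pos eps).
    apply Rmult_lt_compat_l with (r := pos eps) in H; auto.
    replace (eps * (Rabs (p - q) / eps)) with (Rabs (p - q)) in H by (field; lra).
    assert (0 < eps * q) by (apply Rmult_lt_0_compat; auto). lra. }
  lra.
Qed.

Section Conv.
Variables (c nu : R).
Hypothesis Hc : 0 < c.

Let A := Rabs nu + 1.
Let Rk (k : nat) := (INR k + A) * (INR k + A + 1) / ((c + INR k) * (INR k + 1)).

Fixpoint dseq (k : nat) : R :=
  match k with O => Rabs (coef c nu 0) + 1 | S k' => dseq k' * Rk k' end.

Lemma Rk_pos k : 0 < Rk k.
Proof.
  unfold Rk, A. assert (0 <= INR k) by apply pos_INR. generalize (Rabs_pos nu); intros.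
  apply Rdiv_lt_0_compat; apply Rmult_lt_0_compat; lra.
Qed.

Lemma dseq_pos k : 0 < dseq k.
Proof.
  induction k; simpl. generalize (Rabs_pos (coef c nu 0)); lra.
  apply Rmult_lt_0_compat; auto. apply Rk_pos.
Qed.

Lemma coef_le_d k : Rabs (coef c nu k) <= dseq k.
Proof.
  induction k; simpl. lra.
  assert (Hk0 : 0 <= INR k) by apply pos_INR.
  rewrite coef_S by lra. rewrite Rabs_mult.
  apply Rmult_le_compat; try apply Rabs_pos; auto.
  unfold Rk, A. unfold Rdiv. rewrite !Rabs_mult, Rabs_inv.
  rewrite (Rabs_pos_eq ((c + INR k) * (INR k + 1))) by (apply Rmult_le_pos; lra).
  apply Rmult_le_compat_r. left; apply Rinv_0_lt_compat; apply Rmult_lt_0_compat; lra.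
  generalize (Rabs_pos nu); intros.
  apply Rmult_le_compat; try apply Rabs_pos.
  - eapply Rle_trans. apply Rabs_triang. rewrite Rabs_Ropp, Rabs_pos_eq by lra. lra.
  - replace (nu + 1 + INR k) with (nu + (1 + INR k)) by ring.
    eapply Rle_trans. apply Rabs_triang. rewrite (Rabs_pos_eq (1 + INR k)) by lra. lra.
Qed.

Lemma Rk_lim : is_lim_seq Rk 1.
Proof.
  unfold Rk. apply is_lim_seq_ext with (fun k => ((INR k + A) / (INR k + c)) * ((INR k + (A + 1)) / (INR k + 1))).
  - intros k. assert (0 <= INR k) by apply pos_INR. field. lra.
  - replace 1 with (1 * 1) by ring. apply is_lim_seq_mult'; apply ratlim; lra.
Qed.

Lemma CV_disk_coef r : 0 < r < 1 -> CV_disk (coef c nu) r.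
Proof.
  intros Hr. unfold CV_disk.
  apply (ex_series_le (K := R_AbsRing) (V := R_CompleteNormedModule) _ (fun k => Rabs (dseq k * r ^ k))).
  - intros k. change (norm (Rabs (coef c nu k * r ^ k))) with (Rabs (Rabs (coef c nu k * r ^ k))).
    rewrite Rabs_Rabsolu. rewrite !Rabs_mult. apply Rmult_le_compat_r. apply Rabs_pos.
    eapply Rle_trans. apply coef_le_d. apply Rle_abs.
  - apply ex_series_DAlembert with r. lra.
    + intros k. apply Rmult_integral_contrapositive. split.
      generalize (dseq_pos k); lra. apply pow_nonzero. lra.
    + apply is_lim_seq_ext with (fun k => Rk k * r).
      * intros k. simpl. assert (0 < dseq k) by apply dseq_pos.
        assert (0 < r ^ k) by (apply pow_lt; lra).
        rewrite Rabs_pos_eq.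
        -- field. split; lra.
        -- left. apply Rdiv_lt_0_compat. apply Rmult_lt_0_compat. apply Rmult_lt_0_compat; auto.
           apply Rk_pos. apply Rmult_lt_0_compat; lra. apply Rmult_lt_0_compat; lra.
      * replace (Finite r) with (Rbar_mult 1 r) by (simpl; f_equal; ring).
        apply is_lim_seq_scal_r. apply Rk_lim.
Qed.

Lemma CV_coef z : Rabs z < 1 -> Rbar_lt (Rabs z) (CV_radius (coef c nu)).
Proof.
  intros Hz. set (r := (Rabs z + 1) / 2).
  assert (Hr : 0 < r < 1) by (unfold r; generalize (Rabs_pos z); lra).
  assert (Hd := CV_disk_coef r Hr).
  destruct (Lub_Rbar_correct (CV_disk (coef c nu))) as [Hub _].
  specialize (Hub r Hd). unfold CV_radius.
  destruct (Lub_Rbar (CV_disk (coef c nu))) as [l| |]; simpl in *; auto. unfold r in Hub. lra.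
Qed.

End Conv.

Lemma is_derive_mult_R (f g : R -> R) x df dg :
  is_derive f x df -> is_derive g x dg -> is_derive (fun t => f t * g t) x (df * g x + f x * dg).
Proof. intros Hf Hg. exact (is_derive_mult f g x df dg Hf Hg Rmult_comm). Qed.

Lemma is_derive_comp_R (f g : R -> R) x df dg :
  is_derive f (g x) df -> is_derive g x dg -> is_derive (fun t => f (g t)) x (dg * df).
Proof. intros Hf Hg. exact (is_derive_comp f g x df dg Hf Hg). Qed.

Lemma PS_id a nu z : 0 < a -> Rabs z < 1 ->
  PSeries (coef a nu) z = a * PSeries (coef (a + 1) nu) z + z * PSeries (PS_derive (coef (a + 1) nu)) z.
Proof.
  intros Ha Hz. assert (Hc : 0 < a + 1) by lra.
  assert (CV := CV_coef (a + 1) nu Hc z Hz).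
  assert (H1 := PSeries_correct _ _ (CV_radius_inside _ _ CV)).
  assert (H2 := PSeries_correct _ _ (ex_pseries_derive _ _ CV)).
  assert (H3 := is_pseries_incr_1 _ _ _ H2).
  assert (H4 := is_pseries_scal a _ _ _ (Rmult_comm z a) H1).
  assert (H5 := is_pseries_plus _ _ _ _ _ H4 H3).
  apply is_pseries_unique.
  replace (a * PSeries (coef (a + 1) nu) z + z * PSeries (PS_derive (coef (a + 1) nu)) z)
    with (plus (scal a (PSeries (coef (a + 1) nu) z)) (scal z (PSeries (PS_derive (coef (a + 1) nu)) z)))
    by reflexivity.
  revert H5. apply is_pseries_ext. intros k.
  unfold PS_plus, PS_scal, PS_incr_1, PS_derive. destruct k as [|j].
  - change (a * coef (a + 1) nu 0 + 0 = coef a nu 0).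
    rewrite <- (coef_shift a nu 0) by (simpl; lra). simpl. ring.
  - change (a * coef (a + 1) nu (S j) + INR (S j) * coef (a + 1) nu (S j) = coef a nu (S j)).
    rewrite <- (coef_shift a nu (S j)). ring. generalize (pos_INR (S j)); lra.
Qed.

Definition zt (t : R) := (1 - cos t) / 2.
Definition Kf (a nu t : R) := Rpower 2 a * (Rpower (zt t) a * PSeries (coef (a + 1) nu) (zt t)).

Lemma zt_bounds t : 0 < t < PI -> 0 < zt t < 1.
Proof.
  intros Ht. unfold zt.
  assert (cos t < 1). { rewrite <- cos_0. apply cos_decreasing_1; lra. }
  assert (-1 < cos t). { rewrite <- cos_PI. apply cos_decreasing_1; lra. }
  lra.
Qed.

Lemma is_derive_zt t : is_derive zt t (sin t / 2).
Proof. unfold zt. auto_derive. auto. field. Qed.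

Lemma Kf_isd a nu t : -1 < a -> 0 < t < PI ->
  is_derive (Kf a nu) t (Rpower 2 a * ((sin t / 2 * (a * Rpower (zt t) (a - 1))) * PSeries (coef (a + 1) nu) (zt t)
      + Rpower (zt t) a * (sin t / 2 * PSeries (PS_derive (coef (a + 1) nu)) (zt t)))).
Proof.
  intros Ha Ht. destruct (zt_bounds t Ht) as [Hz0 Hz1].
  assert (CV : Rbar_lt (Rabs (zt t)) (CV_radius (coef (a + 1) nu))).
  { apply CV_coef. lra. rewrite Rabs_pos_eq; lra. }
  unfold Kf. apply is_derive_scal. apply (is_derive_mult_R (fun t => Rpower (zt t) a) (fun t => PSeries (coef (a + 1) nu) (zt t))).
  - apply (is_derive_comp_R (fun u => Rpower u a) zt). apply (is_derive_Rpow (zt t) a). lra. apply is_derive_zt.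
  - apply (is_derive_comp_R (PSeries (coef (a + 1) nu)) zt). now apply is_derive_PSeries. apply is_derive_zt.
Qed.

Lemma Kf_cont a nu t : -1 < a -> 0 < t < PI -> continuous (Kf a nu) t.
Proof. intros Ha Ht. apply exd_cont. eexists. now apply Kf_isd. Qed.

Lemma Kf_derive a nu t : 0 < a -> 0 < t < PI -> is_derive (Kf a nu) t (sin t * Kf (a - 1) nu t).
Proof.
  intros Ha Ht. destruct (zt_bounds t Ht) as [Hz0 Hz1].
  assert (H := Kf_isd a nu t ltac:(lra) Ht).
  replace (sin t * Kf (a - 1) nu t) with
    (Rpower 2 a * ((sin t / 2 * (a * Rpower (zt t) (a - 1))) * PSeries (coef (a + 1) nu) (zt t)
      + Rpower (zt t) a * (sin t / 2 * PSeries (PS_derive (coef (a + 1) nu)) (zt t)))); auto.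
  unfold Kf. replace (a - 1 + 1) with a by ring.
  rewrite (PS_id a nu (zt t)) by (auto; rewrite Rabs_pos_eq; lra).
  replace (Rpower 2 a) with (Rpower 2 ((a - 1) + 1)) by (f_equal; ring).
  replace (Rpower (zt t) a) with (Rpower (zt t) ((a - 1) + 1)) by (f_equal; ring).
  rewrite !Rpower_plus, !Rpower_1 by lra. field.
Qed.

Lemma at_right_le_locally (x : R) : filter_le (at_right x) (locally x).
Proof. intros P [eps HP]. exists eps. intros y Hy _. now apply HP. Qed.

Lemma zt_at_right : filterlim zt (at_right 0) (at_right 0).
Proof.
  intros P [d HP].
  assert (Hc : continuous zt 0). { apply exd_cont. eexists. apply is_derive_zt. }
  assert (Hz0 : zt 0 = 0) by (unfold zt; rewrite cos_0; field).
  assert (H1 := Hc (fun y => Rabs (y - 0) < d) ).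
  rewrite Hz0 in H1. destruct (H1 (locally_ball 0 d)) as [e He].
  assert (Hm : 0 < Rmin e PI) by (apply Rmin_pos; [apply cond_pos|apply PI_RGT_0]).
  exists (mkposreal _ Hm). intros y Hy Hy0. apply HP.
  - apply He. change (Rabs (y - 0) < e). change (Rabs (y - 0) < Rmin e PI) in Hy.
    eapply Rlt_le_trans. exact Hy. apply Rmin_l.
  - change (Rabs (y - 0) < Rmin e PI) in Hy. rewrite Rminus_0_r, Rabs_pos_eq in Hy by lra.
    apply zt_bounds. split; auto. eapply Rlt_le_trans. exact Hy. apply Rmin_r.
Qed.

Lemma Kf_lim0 a nu : 0 < a -> filterlim (Kf a nu) (at_right 0) (locally 0).
Proof.
  intros Ha. unfold Kf.
  apply lim0_scal; [apply (@filter_filter _ _ (at_right_proper_filter 0))|].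
  assert (H1 : filterlim (fun t => Rpower (zt t) a) (at_right 0) (locally 0)).
  { apply (filterlim_comp _ _ _ zt (fun u => Rpower u a) _ (at_right 0)). apply zt_at_right. now apply Rpower_lim0. }
  assert (H2 : filterlim (fun t => PSeries (coef (a + 1) nu) (zt t)) (at_right 0)
                 (locally (PSeries (coef (a + 1) nu) 0))).
  { apply (filterlim_comp _ _ _ zt (PSeries (coef (a + 1) nu)) _ (locally 0)). eapply filterlim_filter_le_2. apply at_right_le_locally. apply zt_at_right.
    apply exd_cont. apply ex_derive_PSeries. apply CV_coef. lra. rewrite Rabs_R0; lra. }
  replace 0 with (mult 0 (PSeries (coef (a + 1) nu) 0)) at 2 by (unfold mult; simpl; ring).
  eapply filterlim_comp_2. exact H1. exact H2. apply (filterlim_mult (K := R_AbsRing)).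
Qed.

Lemma Q_eq a nu t : 0 < t < PI -> sinp a t * FerrersP (- a) nu (cos t) = Kf a nu t.
Proof.
  intros Ht. unfold sinp, FerrersP, Kf, zt.
  replace (1 - - a) with (a + 1) by ring. rewrite hyp_PS.
  assert (Hs : 0 < sin t) by (apply sin_gt_0; lra).
  assert (cos t < 1). { rewrite <- cos_0. apply cos_decreasing_1; lra. }
  assert (-1 < cos t). { rewrite <- cos_PI. apply cos_decreasing_1; lra. }
  rewrite <- Rmult_assoc. rewrite <- Rmult_assoc. f_equal.
  unfold Rpower. rewrite <- !exp_plus. f_equal.
  assert (Hl : ln (sin t) = (ln (1 + cos t) + ln (1 - cos t)) / 2).
  { rewrite <- ln_mult by lra.
    replace ((1 + cos t) * (1 - cos t)) with (sin t * sin t).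
    rewrite ln_mult by lra. field.
    generalize (sin2 t). unfold Rsqr. intros E. rewrite E. ring. }
  unfold Rdiv. rewrite ln_mult, ln_Rinv, ln_mult, ln_Rinv by (try apply Rinv_0_lt_compat; lra).
  rewrite Hl. field.
Qed.

Lemma loc_in (x : R) : 0 < x < PI -> locally x (fun y => 0 < y < PI).
Proof.
  intros Hx. assert (He : 0 < Rmin x (PI - x)) by (apply Rmin_pos; lra).
  exists (mkposreal _ He). intros y Hy. change (Rabs (y - x) < Rmin x (PI - x)) in Hy.
  apply Rabs_def2 in Hy. generalize (Rmin_l x (PI - x)) (Rmin_r x (PI - x)). lra.
Qed.

Lemma at_right_in : at_right 0 (fun y => 0 < y < PI).
Proof.
  exists (mkposreal _ PI_RGT_0). intros y Hy Hy0. change (Rabs (y - 0) < PI) in Hy.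
  rewrite Rminus_0_r in Hy. apply Rabs_def2 in Hy. lra.
Qed.

Lemma lim_at_point (F : R -> R) t : filterlim F (at_point t) (locally (F t)).
Proof. intros P HP. unfold filtermap, at_point. now apply locally_singleton. Qed.

Lemma gen_from_deriv (F f : R -> R) (t l0 : R) : 0 < t < PI ->
  (forall x, 0 < x < PI -> is_derive F x (f x)) ->
  (forall x, 0 < x < PI -> continuous f x) ->
  filterlim F (at_right 0) (locally l0) ->
  is_RInt_gen f (at_right 0) (at_point t) (F t - l0).
Proof.
  intros Ht HD HC Hl.
  assert (H : is_RInt_gen (Derive F) (at_right 0) (at_point t) (F t - l0)).
  { apply is_RInt_gen_Derive.
    - apply (ar_prod t (fun a b => forall x, Rmin a b <= x <= Rmax a b -> ex_derive F x)). lra.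
      intros a Ha x Hx. rewrite Rmin_left, Rmax_right in Hx by lra. eexists. apply HD. lra.
    - apply (ar_prod t (fun a b => forall x, Rmin a b <= x <= Rmax a b -> continuous (Derive F) x)). lra.
      intros a Ha x Hx. rewrite Rmin_left, Rmax_right in Hx by lra.
      apply continuous_ext_loc with f. 
      + generalize (loc_in x ltac:(lra)). apply filter_imp. intros y Hy. symmetry.
        apply is_derive_unique. now apply HD.
      + apply HC. lra.
    - exact Hl.
    - apply lim_at_point. }
  revert H. apply is_RInt_gen_ext.
  apply (ar_prod t (fun a b => forall x, Rmin a b < x < Rmax a b -> Derive F x = f x)). lra.
  intros a Ha x Hx. rewrite Rmin_left, Rmax_right in Hx by lra.
  apply is_derive_unique. apply HD. lra.
Qed.

Lemma sc2 x : sin x ^ 2 = 1 - cos x ^ 2.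
Proof. generalize (sin2_cos2 x). unfold Rsqr. intros. nra. Qed.

Lemma sin_pos_in x : 0 < x < PI -> 0 < sin x.
Proof. intros; apply sin_gt_0; lra. Qed.

Lemma cont_cot x : 0 < x < PI -> continuous cot x.
Proof.
  intros Hx. apply exd_cont. unfold cot. auto_derive.
  generalize (sin_pos_in x Hx); lra.
Qed.

Lemma is_derive_cot x : 0 < x < PI -> is_derive cot x (- / (sin x) ^ 2).
Proof.
  intros Hx. assert (Hs := sin_pos_in x Hx). unfold cot. auto_derive. lra.
  field_simplify; try lra. rewrite <- (sin2_cos2 x). unfold Rsqr. field. lra.
Qed.

Section Geo.
Variable r : R -> R.
Hypothesis HW : in_W r.

Lemma W_d1 t : ex_derive r t.  Proof. apply HW. Qed.
Lemma W_d2 t : ex_derive (Derive r) t.  Proof. apply HW. Qed.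
Lemma W_c2 t : continuous (D2 r) t.  Proof. apply HW. Qed.

Lemma W_cd1 t : continuous (Derive r) t.  Proof. apply exd_cont, W_d2. Qed.
Lemma W_c0 t : continuous r t.  Proof. apply exd_cont, W_d1. Qed.

Lemma W_D2 t : is_derive (Derive r) t (D2 r t).
Proof. unfold D2. apply Derive_correct, W_d2. Qed.
Lemma W_D1 t : is_derive r t (Derive r t).
Proof. apply Derive_correct, W_d1. Qed.

Lemma Dr0 : Derive r 0 = 0.
Proof.
  assert (He : forall t, r (- t) = r t) by apply HW.
  assert (H : is_derive (fun x => r (- x)) 0 (-1 * Derive r 0)).
  { apply (is_derive_comp_R r Ropp 0 (Derive r 0) (-1)).
    rewrite Ropp_0. apply W_D1. auto_derive. auto. ring. }
  assert (H2 : Derive (fun x => r (- x)) 0 = Derive r 0) by (apply Derive_ext; auto).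
  assert (E := is_derive_unique _ _ _ H).
  change (Derive (fun x => r (-x)) 0 = -1 * Derive r 0) in E. rewrite H2 in E. lra.
Qed.

Definition F1 x := r x + Derive r x * cot x.
Definition F2 x := Derive r x / sin x.
Definition sA x := D2 r x - Derive r x * cot x.

Lemma r1_F1 x : 0 < x < PI -> r1 r x = F1 x.
Proof.
  intros Hx. unfold r1, F1. destruct (Req_EM_T (sin x) 0) as [E|E]; auto.
  generalize (sin_pos_in x Hx); lra.
Qed.

Lemma astig_sA x : 0 < x < PI -> astig r x = sA x.
Proof. intros Hx. unfold astig, r2, sA. rewrite r1_F1 by auto. unfold F1. ring. Qed.

Lemma C1_eq : r1 r 0 = r 0 + D2 r 0.
Proof. unfold r1. rewrite sin_0. destruct (Req_EM_T 0 0); [reflexivity| congruence]. Qed.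

Lemma sA_cont x : 0 < x < PI -> continuous sA x.
Proof.
  intros Hx. unfold sA. apply (continuous_plus (K := R_AbsRing) (V := R_NormedModule)).
  apply W_c2. apply (continuous_opp (K := R_AbsRing) (V := R_NormedModule)).
  apply (continuous_mult (K := R_AbsRing)). apply W_cd1. now apply cont_cot.
Qed.

Lemma F1_derive x : 0 < x < PI -> is_derive F1 x (sA x * cot x).
Proof.
  intros Hx. assert (Hs := sin_pos_in x Hx).
  assert (H := is_derive_plus _ _ _ _ _ (W_D1 x)
     (is_derive_mult_R (Derive r) cot x _ _ (W_D2 x) (is_derive_cot x Hx))).
  unfold F1. replace (sA x * cot x) with (plus (Derive r x) (D2 r x * cot x + Derive r x * - / sin x ^ 2)).
  exact H. unfold plus; simpl. unfold sA, cot. field_simplify; try lra.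
  rewrite (sc2 x). f_equal. ring.
Qed.

Lemma F2_derive x : 0 < x < PI -> is_derive F2 x (sA x / sin x).
Proof.
  intros Hx. assert (Hs := sin_pos_in x Hx).
  assert (Hi : is_derive (fun y => / sin y) x (- cos x / sin x ^ 2)).
  { auto_derive. lra. field. lra. }
  assert (H := is_derive_mult_R (Derive r) (fun y => / sin y) x _ _ (W_D2 x) Hi).
  unfold F2. unfold Rdiv at 1. replace (sA x / sin x) with (D2 r x * / sin x + Derive r x * (- cos x / sin x ^ 2)).
  exact H. unfold sA, cot. field. lra.
Qed.

Lemma dq_lim (f : R -> R) (l : R) : is_derive f 0 l ->
  filterlim (fun h => (f h - f 0) / h) (at_right 0) (locally l).
Proof.
  intros Hd. apply is_derive_Reals in Hd. intros P [eps HP].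
  destruct (Hd eps (cond_pos eps)) as [d Hdd].
  exists d. intros y Hy Hy0. apply HP. change (Rabs ((f y - f 0) / y - l) < eps).
  change (Rabs (y - 0) < d) in Hy. rewrite Rminus_0_r in Hy.
  assert (H := Hdd y ltac:(lra) Hy). rewrite Rplus_0_l in H. exact H.
Qed.

Lemma F2_lim : filterlim F2 (at_right 0) (locally (D2 r 0)).
Proof.
  assert (H1 := dq_lim (Derive r) (D2 r 0) (W_D2 0)).
  assert (H2 : filterlim (fun h => (sin h - sin 0) / h) (at_right 0) (locally 1)).
  { apply dq_lim. rewrite <- cos_0. apply is_derive_Reals. apply derivable_pt_lim_sin. }
  assert (H3 : filterlim (fun h => / ((sin h - sin 0) / h)) (at_right 0) (locally (/ 1))).
  { apply (filterlim_comp _ _ _ (fun h => (sin h - sin 0) / h) Rinv _ (locally 1)). exact H2.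
    apply exd_cont. auto_derive. lra. }
  rewrite Rinv_1 in H3.
  apply filterlim_ext_loc with (fun h => ((Derive r h - Derive r 0) / h) * / ((sin h - sin 0) / h)).
  - generalize at_right_in. apply filter_imp. intros y Hy. unfold F2. rewrite Dr0, sin_0.
    assert (0 < sin y) by (apply sin_pos_in; auto). field. lra.
  - replace (D2 r 0) with (mult (D2 r 0) 1) by (unfold mult; simpl; ring).
    eapply filterlim_comp_2. exact H1. exact H3. apply (filterlim_mult (K := R_AbsRing)).
Qed.

Lemma F1_lim : filterlim F1 (at_right 0) (locally (r1 r 0)).
Proof.
  rewrite C1_eq.
  apply filterlim_ext_loc with (fun h => r h + F2 h * cos h).
  - generalize at_right_in. apply filter_imp. intros y Hy. unfold F1, F2, cot. 
    assert (0 < sin y) by (apply sin_pos_in; auto). field. lra.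
  - assert (Hr : filterlim r (at_right 0) (locally (r 0))).
    { eapply filterlim_filter_le_1. apply at_right_le_locally. apply W_c0. }
    assert (Hc : filterlim cos (at_right 0) (locally 1)).
    { rewrite <- cos_0. eapply filterlim_filter_le_1. apply at_right_le_locally.
      apply exd_cont. auto_derive. auto. }
    assert (Hm : filterlim (fun h => F2 h * cos h) (at_right 0) (locally (D2 r 0))).
    { replace (D2 r 0) with (mult (D2 r 0) 1) by (unfold mult; simpl; ring).
      eapply filterlim_comp_2. apply F2_lim. exact Hc. apply (filterlim_mult (K := R_AbsRing)). }
    replace (r 0 + D2 r 0) with (plus (r 0) (D2 r 0)) by reflexivity.
    eapply filterlim_comp_2. exact Hr. exact Hm. apply (filterlim_plus (K := R_AbsRing) (V := R_NormedModule)).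
Qed.

End Geo.

Lemma sinp_pos a x : 0 < sinp a x.
Proof. apply Rpow_pos. Qed.

Lemma sinp_plus a b x : sinp (a + b) x = sinp a x * sinp b x.
Proof. unfold sinp. apply Rpower_plus. Qed.

Lemma sinp_1 x : 0 < x < PI -> sinp 1 x = sin x.
Proof. intros Hx. unfold sinp. apply Rpower_1. now apply sin_pos_in. Qed.

Lemma sinp_derive a x : 0 < x < PI -> is_derive (sinp a) x (a * sinp (a - 1) x * cos x).
Proof.
  intros Hx. unfold sinp. replace (a * Rpower (sin x) (a - 1) * cos x) with (cos x * (a * Rpower (sin x) (a - 1))) by ring.
  apply (is_derive_comp_R (fun u => Rpower u a) sin). apply (is_derive_Rpow (sin x) a).
  now apply sin_pos_in. apply is_derive_Reals. apply derivable_pt_lim_sin.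
Qed.

Lemma sinp_cont a x : 0 < x < PI -> continuous (sinp a) x.
Proof. intros Hx. apply exd_cont. eexists. now apply sinp_derive. Qed.

Lemma cont_sin x : continuous sin x.
Proof. apply exd_cont. auto_derive. auto. Qed.
Lemma cont_cos x : continuous cos x.
Proof. apply exd_cont. auto_derive. auto. Qed.

Lemma sin_at_right : filterlim sin (at_right 0) (at_right 0).
Proof.
  intros P [d HP].
  assert (H1 := cont_sin 0 (fun y => Rabs (y - 0) < d)).
  rewrite sin_0 in H1. destruct (H1 (locally_ball 0 d)) as [e He].
  assert (Hm : 0 < Rmin e PI) by (apply Rmin_pos; [apply cond_pos|apply PI_RGT_0]).
  exists (mkposreal _ Hm). intros y Hy Hy0. apply HP.
  - apply He. change (Rabs (y - 0) < e). change (Rabs (y - 0) < Rmin e PI) in Hy.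
    eapply Rlt_le_trans. exact Hy. apply Rmin_l.
  - change (Rabs (y - 0) < Rmin e PI) in Hy. rewrite Rminus_0_r, Rabs_pos_eq in Hy by lra.
    apply sin_pos_in. split; auto. eapply Rlt_le_trans. exact Hy. apply Rmin_r.
Qed.

Lemma sinp_lim0 a : 0 < a -> filterlim (sinp a) (at_right 0) (locally 0).
Proof.
  intros Ha. unfold sinp.
  apply (filterlim_comp _ _ _ sin (fun u => Rpower u a) _ (at_right 0)). apply sin_at_right.
  now apply Rpower_lim0.
Qed.

Lemma id_lim0 : filterlim (fun x : R => x) (at_right 0) (locally 0).
Proof. eapply filterlim_filter_le_1. apply at_right_le_locally. apply filterlim_id. Qed.

Lemma sinI_exists n t : -1 < n -> 0 < t < PI ->
  exists I, is_RInt_gen (sinp (2 * n + 1)) (at_right 0) (at_point t) I.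
Proof.
  intros Hn Ht.
  assert (Hct : -1 < cos t). { rewrite <- cos_PI. apply cos_decreasing_1; lra. }
  set (M := / (1 + cos t)).
  apply (dom_gen (at_right 0) (at_right_proper_filter 0) (sinp (2 * n + 1))
     (fun x => sinp (2 * n + 1) x * cos x + M) (fun x => / (2 * n + 2) * sinp (2 * n + 2) x + M * x) t 0).
  - exists (mkposreal t ltac:(lra)). intros a Ha Ha0. change (Rabs (a - 0) < t) in Ha.
    rewrite Rminus_0_r, Rabs_pos_eq in Ha by lra.
    intros x Hx. rewrite Rmin_left, Rmax_right in Hx by lra.
    assert (Hx0 : 0 < x < PI) by lra.
    assert (Hs := sin_pos_in x Hx0).
    split; [|split; [|split]].
    + split. left; apply sinp_pos.
      assert (Hcx : cos t <= cos x).
      { destruct (Req_dec x t). subst; lra. left. apply cos_decreasing_1; lra. }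
      assert (H3 : sinp (2 * n + 1) x * (1 - cos x) * (1 + cos x) <= 1).
      { replace (sinp (2 * n + 1) x * (1 - cos x) * (1 + cos x)) with (sinp (2 * n + 3) x).
        - apply Rpow_le1. split; auto. generalize (SIN_bound x); lra. lra.
        - replace (2 * n + 3) with ((2 * n + 1) + (1 + 1)) by ring. rewrite (sinp_plus (2 * n + 1) (1 + 1)).
          rewrite (sinp_plus 1 1), sinp_1 by auto.
          generalize (sc2 x). intros E. simpl in E. rewrite Rmult_assoc. f_equal. nra. }
      assert (H4 : sinp (2 * n + 1) x * (1 - cos x) <= / (1 + cos x)).
      { apply Rmult_le_reg_r with (1 + cos x). lra. rewrite Rinv_l by lra. exact H3. }
      assert (H5 : / (1 + cos x) <= M). { unfold M. apply Rinv_le_contravar; lra. }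
      nra.
    + apply (is_derive_plus (K := R_AbsRing) (V := R_NormedModule)
               (fun x => / (2 * n + 2) * sinp (2 * n + 2) x) (fun x => M * x)).
      * replace (sinp (2 * n + 1) x * cos x) with (/ (2 * n + 2) * ((2 * n + 2) * sinp (2 * n + 2 - 1) x * cos x)).
        apply is_derive_scal. now apply sinp_derive.
        replace (2 * n + 2 - 1) with (2 * n + 1) by ring. field. lra.
      * auto_derive. auto. ring.
    + now apply sinp_cont.
    + apply (continuous_plus (K := R_AbsRing) (V := R_NormedModule)).
      apply (continuous_mult (K := R_AbsRing)). now apply sinp_cont. apply cont_cos.
      apply continuous_const.
  - assert (E0 : plus 0 0 = 0) by (unfold plus; simpl; ring).
    assert (H : filterlim (fun x => plus (/ (2 * n + 2) * sinp (2 * n + 2) x) (M * x)) (at_right 0) (locally (plus 0 0))).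
    { eapply filterlim_comp_2.
    + apply lim0_scal; [apply (@filter_filter _ _ (at_right_proper_filter 0))|]. apply sinp_lim0. lra.
    + apply lim0_scal; [apply (@filter_filter _ _ (at_right_proper_filter 0))|]. apply id_lim0.
    + apply (filterlim_plus (K := R_AbsRing) (V := R_NormedModule)). }
    rewrite E0 in H. exact H.
Qed.

Lemma CS (p q w : R -> R) a b : a <= b ->
  ex_RInt p a b -> ex_RInt q a b -> ex_RInt w a b ->
  (forall x, a < x < b -> 0 <= p x) ->
  (forall x l, a < x < b -> 0 <= l * l * p x + 2 * l * q x + w x) ->
  (RInt q a b) ^ 2 <= RInt p a b * RInt w a b.
Proof.
  intros Hab Hp Hq Hw Hp0 Hquad.
  assert (Hcomb : forall l, 0 <= l * l * RInt p a b + 2 * l * RInt q a b + RInt w a b).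
  { intros l.
    assert (H1 := is_RInt_scal _ a b (l * l) _ (RInt_correct _ _ _ Hp)).
    assert (H2 := is_RInt_scal _ a b (2 * l) _ (RInt_correct _ _ _ Hq)).
    assert (H3 := is_RInt_plus _ _ a b _ _ (is_RInt_plus _ _ a b _ _ H1 H2) (RInt_correct _ _ _ Hw)).
    assert (E := is_RInt_unique _ _ _ _ H3).
    unfold plus, scal in E; simpl in E; unfold mult in E; simpl in E.
    rewrite <- E. apply RInt_ge_0. exact Hab. eexists; exact H3.
    intros x Hx. unfold plus, scal; simpl; unfold mult; simpl. now apply Hquad. }
  set (P := RInt p a b) in *. set (Q := RInt q a b) in *. set (W := RInt w a b) in *.
  assert (HP : 0 <= P) by (apply RInt_ge_0; auto).
  destruct HP as [HP|HP].
  - specialize (Hcomb (- Q / P)).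
    replace (- Q / P * (- Q / P) * P + 2 * (- Q / P) * Q + W) with (W - Q * Q / P) in Hcomb by (field; lra).
    assert (Q * Q / P <= W) by lra.
    apply Rmult_le_compat_r with (r := P) in H; [|lra].
    replace (Q * Q / P * P) with (Q ^ 2) in H by (field; lra). lra.
  - rewrite <- HP. destruct (Req_dec Q 0) as [E|E].
    + rewrite E. lra.
    + exfalso. specialize (Hcomb (- (W + 1) / (2 * Q))). rewrite <- HP in Hcomb.
      replace (- (W + 1) / (2 * Q) * (- (W + 1) / (2 * Q)) * 0 + 2 * (- (W + 1) / (2 * Q)) * Q + W) with (-1) in Hcomb
        by (field; auto). lra.
Qed.

Lemma le_gen_inner (h : R -> R) (l a b : R) : 0 < a <= b -> b < PI ->
  (forall x, 0 < x < PI -> continuous h x) -> (forall x, 0 < x < PI -> 0 <= h x) ->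
  is_RInt_gen h (at_right 0) (at_left PI) l -> RInt h a b <= l.
Proof.
  intros Ha Hb Hc Hp Hl.
  apply (gen_ge (at_right 0) (at_left PI) (at_right_proper_filter 0) (at_left_proper_filter PI) h l _ Hl).
  apply Filter_prod with (fun x => 0 < x < a) (fun y => b < y < PI).
  - exists (mkposreal a ltac:(lra)). intros y Hy Hy0. change (Rabs (y - 0) < a) in Hy.
    rewrite Rminus_0_r, Rabs_pos_eq in Hy by lra. lra.
  - exists (mkposreal (PI - b) ltac:(lra)). intros y Hy Hy0. change (Rabs (y - PI) < PI - b) in Hy.
    apply Rabs_def2 in Hy. lra.
  - intros x y Hx Hy I HI. simpl in HI. rewrite <- (is_RInt_unique _ _ _ _ HI).
    assert (E1 : ex_RInt h x a) by (apply exRc; intros z Hz; apply Hc; unfold Rmin, Rmax in Hz; destruct (Rle_dec x a); lra).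
    assert (E2 : ex_RInt h a b) by (apply exRc; intros z Hz; apply Hc; unfold Rmin, Rmax in Hz; destruct (Rle_dec a b); lra).
    assert (E3 : ex_RInt h b y) by (apply exRc; intros z Hz; apply Hc; unfold Rmin, Rmax in Hz; destruct (Rle_dec b y); lra).
    rewrite <- (RInt_Chasles h x a y E1 (ex_RInt_Chasles _ _ _ _ E2 E3)).
    rewrite <- (RInt_Chasles h a b y E2 E3).
    unfold plus; simpl.
    assert (0 <= RInt h x a) by (apply RInt_ge_0; [lra|exact E1|intros; apply Hp; lra]).
    assert (0 <= RInt h b y) by (apply RInt_ge_0; [lra|exact E3|intros; apply Hp; lra]).
    lra.
Qed.

Lemma le_gen_pt (h : R -> R) (l a t : R) : 0 < a < t -> t < PI ->
  (forall x, 0 < x < PI -> continuous h x) -> (forall x, 0 < x < PI -> 0 <= h x) ->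
  is_RInt_gen h (at_right 0) (at_point t) l -> RInt h a t <= l.
Proof.
  intros Ha Hb Hc Hp Hl.
  apply (gen_ge (at_right 0) (at_point t) (at_right_proper_filter 0) (at_point_filter t) h l _ Hl).
  apply Filter_prod with (fun x => 0 < x < a) (fun y => y = t).
  - exists (mkposreal a ltac:(lra)). intros y Hy Hy0. change (Rabs (y - 0) < a) in Hy.
    rewrite Rminus_0_r, Rabs_pos_eq in Hy by lra. lra.
  - reflexivity.
  - intros x y Hx Hy I HI. subst y. simpl in HI. rewrite <- (is_RInt_unique _ _ _ _ HI).
    assert (E1 : ex_RInt h x a) by (apply exRc; intros z Hz; apply Hc; unfold Rmin, Rmax in Hz; destruct (Rle_dec x a); lra).
    assert (E2 : ex_RInt h a t) by (apply exRc; intros z Hz; apply Hc; unfold Rmin, Rmax in Hz; destruct (Rle_dec a t); lra).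
    rewrite <- (RInt_Chasles h x a t E1 E2). unfold plus; simpl.
    assert (0 <= RInt h x a) by (apply RInt_ge_0; [lra|exact E1|intros; apply Hp; lra]).
    lra.
Qed.

Lemma bound_abs (h : R -> R) (L B t : R) : 0 < t < PI ->
  (forall x, 0 < x < PI -> continuous h x) ->
  (forall a, 0 < a < t -> Rabs (RInt h a t) <= B) ->
  is_RInt_gen h (at_right 0) (at_point t) L -> Rabs L <= B.
Proof.
  intros Ht Hc HB HL. apply Rabs_le. split.
  - apply (gen_ge (at_right 0) (at_point t) (at_right_proper_filter 0) (at_point_filter t) h L _ HL).
    apply (ar_prod t (fun a b => forall I, is_RInt h a b I -> - B <= I)). lra.
    intros a Ha I HI. rewrite <- (is_RInt_unique _ _ _ _ HI). specialize (HB a Ha).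
    apply Rabs_le_between in HB. lra.
  - apply (gen_le (at_right 0) (at_point t) (at_right_proper_filter 0) (at_point_filter t) h L _ HL).
    apply (ar_prod t (fun a b => forall I, is_RInt h a b I -> I <= B)). lra.
    intros a Ha I HI. rewrite <- (is_RInt_unique _ _ _ _ HI). specialize (HB a Ha).
    apply Rabs_le_between in HB. lra.
Qed.

Lemma cont_mult_R (f g : R -> R) x : continuous f x -> continuous g x -> continuous (fun y => f y * g y) x.
Proof. intros. apply (continuous_mult (K := R_AbsRing)); auto. Qed.
Lemma cont_plus_R (f g : R -> R) x : continuous f x -> continuous g x -> continuous (fun y => f y + g y) x.
Proof. intros. apply (continuous_plus (K := R_AbsRing) (V := R_NormedModule)); auto. Qed.
Lemma cont_minus_R (f g : R -> R) x : continuous f x -> continuous g x -> continuous (fun y => f y - g y) x.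
Proof.
  intros. apply (continuous_plus (K := R_AbsRing) (V := R_NormedModule)); auto.
  apply (continuous_opp (K := R_AbsRing) (V := R_NormedModule)); auto.
Qed.
Lemma cont_inv_R (f : R -> R) x : continuous f x -> f x <> 0 -> continuous (fun y => / f y) x.
Proof.
  intros Hf Hn. apply (continuous_comp f Rinv). auto. apply exd_cont. auto_derive. auto.
Qed.

Lemma tbt (f : R -> R) (gM : nat -> R -> R) (w : R -> R) (t Lf Kt : R) (LM : nat -> R) :
  0 < t < PI ->
  (forall x, 0 < x < PI -> continuous f x) ->
  (forall M x, 0 < x < PI -> continuous (gM M) x) ->
  (forall x, 0 < x < PI -> continuous w x) ->
  0 <= Kt ->
  (forall a, 0 < a < t -> RInt (fun x => w x ^ 2 / sin x) a t <= Kt) ->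
  L2sin_lim gM f ->
  is_RInt_gen (fun x => f x * w x) (at_right 0) (at_point t) Lf ->
  (forall M, is_RInt_gen (fun x => gM M x * w x) (at_right 0) (at_point t) (LM M)) ->
  is_lim_seq LM Lf.
Proof.
  intros Ht Hcf Hcg Hcw HK HKb HL2 HLf HLM.
  apply is_lim_seq_spec. intros eps.
  assert (Hep := cond_pos eps).
  set (e' := eps * eps / (Kt + 1)).
  assert (He' : 0 < e') by (unfold e'; apply Rdiv_lt_0_compat; nra).
  destruct (HL2 e' He') as [N HN]. exists N. intros M HM.
  destruct (HN M HM) as [l [Hl Hle]].
  assert (HD : is_RInt_gen (fun x => (f x - gM M x) * w x) (at_right 0) (at_point t) (Lf - LM M)).
  { assert (H := is_RInt_gen_minus _ _ _ _ HLf (HLM M)).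
    revert H. apply is_RInt_gen_ext.
    apply (ar_prod t (fun a b => forall x, Rmin a b < x < Rmax a b ->
       minus (f x * w x) (gM M x * w x) = (f x - gM M x) * w x)). lra.
    intros. unfold minus, plus, opp; simpl. ring. }
  assert (Hsp : forall x, 0 < x < PI -> 0 < sin x) by apply sin_pos_in.
  set (p := fun x => (f x - gM M x) ^ 2 * sin x).
  assert (Hpc : forall x, 0 < x < PI -> continuous p x).
  { intros x Hx. unfold p. apply cont_mult_R. simpl.
    apply cont_mult_R. apply cont_minus_R; auto.
    apply cont_mult_R. apply cont_minus_R; auto. apply continuous_const. apply cont_sin. }
  assert (Hp0 : forall x, 0 < x < PI -> 0 <= p x).
  { intros x Hx. unfold p. apply Rmult_le_pos. apply pow2_ge_0. left; auto. }
  assert (Hl0 : 0 <= l).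
  { eapply Rle_trans; [|apply (le_gen_inner p l (t/2) t); auto; lra].
    apply RInt_ge_0. lra. apply exRc. intros z Hz. apply Hpc. unfold Rmin, Rmax in Hz. destruct (Rle_dec (t/2) t); lra.
    intros x Hx. apply Hp0. lra. }
  assert (Hbound : forall a, 0 < a < t -> Rabs (RInt (fun x => (f x - gM M x) * w x) a t) <= sqrt (l * Kt)).
  { intros a Ha.
    assert (Hin : forall z, Rmin a t <= z <= Rmax a t -> 0 < z < PI)
      by (intros z Hz; unfold Rmin, Rmax in Hz; destruct (Rle_dec a t); lra).
    assert (Hcs := CS p (fun x => (f x - gM M x) * w x) (fun x => w x ^ 2 / sin x) a t ltac:(lra)).
    assert (Hw0 : forall x, 0 < x < PI -> 0 <= w x ^ 2 / sin x).
    { intros x Hx. apply Rdiv_le_0_compat. apply pow2_ge_0. auto. }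
    assert (Hwc : forall x, 0 < x < PI -> continuous (fun x => w x ^ 2 / sin x) x).
    { intros x Hx. apply cont_mult_R. simpl. apply cont_mult_R. auto. apply cont_mult_R. auto.
      apply continuous_const. apply cont_inv_R. apply cont_sin. specialize (Hsp x Hx). lra. }
    assert (Hqc : forall x, 0 < x < PI -> continuous (fun x => (f x - gM M x) * w x) x).
    { intros x Hx. apply cont_mult_R; auto. apply cont_minus_R; auto. }
    specialize (Hcs (exRc _ _ _ (fun z Hz => Hpc z (Hin z Hz)))
                    (exRc _ _ _ (fun z Hz => Hqc z (Hin z Hz)))
                    (exRc _ _ _ (fun z Hz => Hwc z (Hin z Hz)))).
    assert (Hcs2 : (RInt (fun x => (f x - gM M x) * w x) a t) ^ 2 <=
                   RInt p a t * RInt (fun x => w x ^ 2 / sin x) a t).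
    { apply Hcs. intros x Hx. apply Hp0. lra.
      intros x lam Hx. assert (Hs := Hsp x ltac:(lra)).
      replace (lam * lam * p x + 2 * lam * ((f x - gM M x) * w x) + w x ^ 2 / sin x)
        with ((lam * (f x - gM M x) * sin x + w x) ^ 2 * / sin x) by (unfold p; field; lra).
      apply Rmult_le_pos. apply pow2_ge_0. left; apply Rinv_0_lt_compat; auto. }
    assert (H1 : RInt p a t <= l) by (apply le_gen_inner; auto; lra).
    assert (H2 : 0 <= RInt p a t).
    { apply RInt_ge_0. lra. apply exRc. intros z Hz. apply Hpc. auto. intros x Hx. apply Hp0. lra. }
    assert (H3 : 0 <= RInt (fun x => w x ^ 2 / sin x) a t).
    { apply RInt_ge_0. lra. apply exRc. intros z Hz. apply Hwc. auto. intros x Hx. apply Hw0. lra. }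
    assert (H4 := HKb a Ha).
    assert (H5 : RInt p a t * RInt (fun x => w x ^ 2 / sin x) a t <= l * Kt)
      by (apply Rmult_le_compat; auto).
    rewrite <- sqrt_Rsqr_abs. apply sqrt_le_1_alt. unfold Rsqr. match goal with |- ?x * ?x <= _ => replace (x * x) with (x ^ 2) by ring end. lra. }
  assert (HLb := bound_abs _ _ _ t Ht
     (fun x Hx => cont_mult_R _ _ x (cont_minus_R _ _ x (Hcf x Hx) (Hcg M x Hx)) (Hcw x Hx)) Hbound HD).
  assert (Hlt : l * Kt < eps * eps).
  { apply Rle_lt_trans with (e' * Kt). apply Rmult_le_compat_r; auto.
    unfold e'. apply Rmult_lt_reg_r with (Kt + 1). lra.
    replace (eps * eps / (Kt + 1) * Kt * (Kt + 1)) with (eps * eps * Kt) by (field; lra). nra. }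
  assert (Hsq : sqrt (l * Kt) < eps).
  { rewrite <- (sqrt_square eps) by lra. apply sqrt_lt_1_alt. split; [apply Rmult_le_pos; auto| auto]. }
  rewrite Rabs_minus_sym. lra.
Qed.

Lemma S1_0 (a : nat -> R) : @eq R (sum_n_m a 1 0) 0.
Proof. apply (sum_n_m_zero (G := R_AbelianMonoid)). lia. Qed.

Lemma S1_S (a : nat -> R) M : @eq R (sum_n_m a 1 (S M)) (sum_n_m a 1 M + a (S M)).
Proof.
  destruct M.
  - rewrite S1_0. rewrite (sum_n_n (G := R_AbelianMonoid)). apply eq_sym, Rplus_0_l.
  - rewrite (sum_n_Sm (G := R_AbelianMonoid)) by lia. reflexivity.
Qed.

Lemma sum_deriv (A d : nat -> R -> R) M x :
  (forall m, is_derive (A m) x (d m x)) ->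
  is_derive (fun y => sum_n_m (fun m => A m y) 1 M) x (sum_n_m (fun m => d m x) 1 M).
Proof.
  intros Hd. induction M.
  - apply (is_derive_ext (fun _ => 0)). intros; rewrite S1_0; auto.
    rewrite S1_0. apply (is_derive_const (K := R_AbsRing) (V := R_NormedModule) 0).
  - apply (is_derive_ext (fun y => sum_n_m (fun m => A m y) 1 M + A (S M) y)).
    intros; rewrite S1_S; auto.
    rewrite S1_S. apply (is_derive_plus (K := R_AbsRing) (V := R_NormedModule)); auto.
Qed.

Lemma lim0_plus (F : (R -> Prop) -> Prop) {FF : Filter F} (f g : R -> R) :
  filterlim f F (locally 0) -> filterlim g F (locally 0) -> filterlim (fun x => f x + g x) F (locally 0).
Proof.
  intros Hf Hg. assert (E0 : plus 0 0 = 0) by (unfold plus; simpl; ring).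
  assert (H : filterlim (fun x => plus (f x) (g x)) F (locally (plus 0 0))).
  { eapply filterlim_comp_2. exact Hf. exact Hg. apply (filterlim_plus (K := R_AbsRing) (V := R_NormedModule)). }
  rewrite E0 in H. exact H.
Qed.

Lemma lim_mult0 (F : (R -> Prop) -> Prop) {FF : Filter F} (f g : R -> R) a :
  filterlim f F (locally a) -> filterlim g F (locally 0) -> filterlim (fun x => f x * g x) F (locally 0).
Proof.
  intros Hf Hg. assert (E0 : mult a 0 = 0) by (unfold mult; simpl; ring).
  assert (H : filterlim (fun x => mult (f x) (g x)) F (locally (mult a 0))).
  { eapply filterlim_comp_2. exact Hf. exact Hg. apply (filterlim_mult (K := R_AbsRing)). }
  rewrite E0 in H. exact H.
Qed.

Lemma sum_lim0 (A : nat -> R -> R) M :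
  (forall m, filterlim (A m) (at_right 0) (locally 0)) ->
  filterlim (fun y => sum_n_m (fun m => A m y) 1 M) (at_right 0) (locally 0).
Proof.
  intros Hl. induction M.
  - apply (filterlim_ext (fun _ => 0)). intros; rewrite S1_0; auto. apply filterlim_const.
  - apply (filterlim_ext (fun y => sum_n_m (fun m => A m y) 1 M + A (S M) y)).
    intros; rewrite S1_S; auto.
    apply lim0_plus; auto. apply (@filter_filter _ _ (at_right_proper_filter 0)).
Qed.

Lemma sum_cont (A : nat -> R -> R) M x :
  (forall m, continuous (A m) x) -> continuous (fun y => sum_n_m (fun m => A m y) 1 M) x.
Proof.
  intros Hc. induction M.
  - apply (continuous_ext (fun _ => 0)). intros; rewrite S1_0; auto. apply continuous_const.
  - apply (continuous_ext (fun y => sum_n_m (fun m => A m y) 1 M + A (S M) y)).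
    intros; rewrite S1_S; auto. apply cont_plus_R; auto.
Qed.

Lemma ext_in (f g : R -> R) t l : 0 < t < PI -> (forall x, 0 < x < PI -> f x = g x) ->
  is_RInt_gen f (at_right 0) (at_point t) l -> is_RInt_gen g (at_right 0) (at_point t) l.
Proof.
  intros Ht He. apply is_RInt_gen_ext.
  apply (ar_prod t (fun a b => forall x, Rmin a b < x < Rmax a b -> f x = g x)). lra.
  intros a Ha x Hx. rewrite Rmin_left, Rmax_right in Hx by lra. apply He. lra.
Qed.

Lemma lim_to_series (b : nat -> R) (c0 L : R) :
  is_lim_seq (fun M => c0 + sum_n_m b 1 M) L -> is_series (fun k => b (S k)) (L - c0).
Proof.
  intros H.
  assert (H1 : is_lim_seq (fun M => (c0 + sum_n_m b 1 M) - c0) (L - c0)).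
  { apply is_lim_seq_minus'. exact H. apply is_lim_seq_const. }
  apply is_lim_seq_incr_1 in H1.
  assert (H2 : is_lim_seq (sum_n (fun k => b (S k))) (L - c0)).
  { revert H1. apply is_lim_seq_ext. intros M. unfold sum_n. rewrite (sum_n_m_S (G := R_AbelianMonoid)). ring. }
  exact H2.
Qed.

Lemma sum_mult_r (a : nat -> R) c M : @eq R (sum_n_m (fun m => a m * c) 1 M) (sum_n_m a 1 M * c).
Proof. induction M. rewrite !S1_0; ring. rewrite !S1_S, IHM. ring. Qed.

Section Main.
Variables (n : R) (r : R -> R) (gamma : nat -> R).
Hypothesis Hn : -1 < n < 1.
Hypothesis HW : in_W r.

Definition T m x := gamma m * FerrersP (- n) (n + INR m) (cos x).
Definition gM M x := gamma 0 * sinp n x + sum_n_m (fun m => T m x) 1 M.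
Definition fA x := astig r x / sinp (n + 2) x.
Definition w1 x := sinp (n + 1) x * cos x.
Definition w2 x := sinp (n + 1) x.
Definition A1 m x := gamma m * (Kf (n + 2) (n + INR m) x + cos x * Kf (n + 1) (n + INR m) x).
Definition A2 m x := gamma m * Kf (n + 1) (n + INR m) x.

Lemma sp_split a x : 0 < x < PI -> sinp (a + 1) x = sinp a x * sin x.
Proof. intros Hx. rewrite sinp_plus, sinp_1; auto. Qed.

Lemma T_eq m x : 0 < x < PI -> T m x = gamma m * (Kf n (n + INR m) x * / sinp n x).
Proof.
  intros Hx. unfold T. rewrite <- (Q_eq n _ x Hx). assert (0 < sinp n x) by apply sinp_pos. field. lra.
Qed.

Lemma T_cont m x : 0 < x < PI -> continuous (T m) x.
Proof.
  intros Hx. apply continuous_ext_loc with (fun y => gamma m * (Kf n (n + INR m) y * / sinp n y)).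
  - generalize (loc_in x Hx). apply filter_imp. intros y Hy. symmetry. now apply T_eq.
  - apply cont_mult_R. apply continuous_const. apply cont_mult_R. apply Kf_cont; lra.
    apply cont_inv_R. now apply sinp_cont. generalize (sinp_pos n x); lra.
Qed.

Lemma gM_cont M x : 0 < x < PI -> continuous (gM M) x.
Proof.
  intros Hx. unfold gM. apply cont_plus_R. apply cont_mult_R. apply continuous_const. now apply sinp_cont.
  apply sum_cont. intros m. now apply T_cont.
Qed.

Lemma fA_cont x : 0 < x < PI -> continuous fA x.
Proof.
  intros Hx. apply continuous_ext_loc with (fun y => sA r y * / sinp (n + 2) y).
  - generalize (loc_in x Hx). apply filter_imp. intros y Hy. unfold fA. rewrite astig_sA; auto.
  - apply cont_mult_R. apply sA_cont; auto. apply cont_inv_R. now apply sinp_cont. generalize (sinp_pos (n + 2) x); lra.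
Qed.

Lemma w1_cont x : 0 < x < PI -> continuous w1 x.
Proof. intros Hx. apply cont_mult_R. now apply sinp_cont. apply cont_cos. Qed.
Lemma w2_cont x : 0 < x < PI -> continuous w2 x.
Proof. intros Hx. now apply sinp_cont. Qed.

Lemma A1_der m x : 0 < x < PI -> is_derive (A1 m) x (T m x * w1 x).
Proof.
  intros Hx. set (nu := n + INR m).
  replace (T m x * w1 x) with (gamma m * (sin x * Kf (n + 2 - 1) nu x +
      (- sin x * Kf (n + 1) nu x + cos x * (sin x * Kf (n + 1 - 1) nu x)))).
  - unfold A1. apply is_derive_scal.
    apply (is_derive_plus (K := R_AbsRing) (V := R_NormedModule) (Kf (n + 2) nu) (fun y => cos y * Kf (n + 1) nu y)).
    + apply Kf_derive; auto; lra.
    + apply is_derive_mult_R. auto_derive. auto. ring. apply Kf_derive; auto; lra.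
  - replace (n + 2 - 1) with (n + 1) by ring. replace (n + 1 - 1) with n by ring.
    rewrite T_eq by auto. unfold nu, w1. rewrite sp_split by auto.
    assert (0 < sinp n x) by apply sinp_pos. field. lra.
Qed.

Lemma A2_der m x : 0 < x < PI -> is_derive (A2 m) x (T m x * w2 x).
Proof.
  intros Hx. set (nu := n + INR m).
  replace (T m x * w2 x) with (gamma m * (sin x * Kf (n + 1 - 1) nu x)).
  - unfold A2. apply is_derive_scal. apply Kf_derive; auto; lra.
  - replace (n + 1 - 1) with n by ring.
    rewrite T_eq by auto. unfold nu, w2. rewrite sp_split by auto.
    assert (0 < sinp n x) by apply sinp_pos. field. lra.
Qed.

Lemma A1_lim m : filterlim (A1 m) (at_right 0) (locally 0).
Proof.
  unfold A1. apply lim0_scal; [apply (@filter_filter _ _ (at_right_proper_filter 0))|].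
  apply lim0_plus; [apply (@filter_filter _ _ (at_right_proper_filter 0))| |].
  apply Kf_lim0; lra.
  apply lim_mult0 with (cos 0); [apply (@filter_filter _ _ (at_right_proper_filter 0))| |].
  eapply filterlim_filter_le_1. apply at_right_le_locally. apply cont_cos.
  apply Kf_lim0; lra.
Qed.

Lemma A2_lim m : filterlim (A2 m) (at_right 0) (locally 0).
Proof.
  unfold A2. apply lim0_scal; [apply (@filter_filter _ _ (at_right_proper_filter 0))|].
  apply Kf_lim0; lra.
Qed.

Section AtT.
Variable t : R.
Hypothesis Ht : 0 < t < PI.

Lemma Lf1 : is_RInt_gen (fun x => fA x * w1 x) (at_right 0) (at_point t) (F1 r t - r1 r 0).
Proof.
  assert (H := gen_from_deriv (F1 r) (fun x => sA r x * cot x) t (r1 r 0) Ht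
     (F1_derive r HW) (fun x Hx => cont_mult_R _ _ x (sA_cont r HW x Hx) (cont_cot x Hx)) (F1_lim r HW)).
  revert H. apply ext_in; auto. intros x Hx. unfold fA, w1, cot. rewrite astig_sA by auto.
  replace (n + 2) with ((n + 1) + 1) by ring. rewrite sp_split by auto.
  assert (0 < sinp (n + 1) x) by apply sinp_pos. assert (0 < sin x) by (apply sin_pos_in; auto).
  field. lra.
Qed.

Lemma Lf2 : is_RInt_gen (fun x => fA x * w2 x) (at_right 0) (at_point t) (F2 r t - D2 r 0).
Proof.
  assert (Hc : forall x, 0 < x < PI -> continuous (fun x => sA r x / sin x) x).
  { intros x Hx. apply cont_mult_R. apply sA_cont; auto. apply cont_inv_R. apply cont_sin.
    generalize (sin_pos_in x Hx); lra. }
  assert (H := gen_from_deriv (F2 r) (fun x => sA r x / sin x) t (D2 r 0) Ht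
     (F2_derive r HW) Hc (F2_lim r HW)).
  revert H. apply ext_in; auto. intros x Hx. unfold fA, w2. rewrite astig_sA by auto.
  replace (n + 2) with ((n + 1) + 1) by ring. rewrite sp_split by auto.
  assert (0 < sinp (n + 1) x) by apply sinp_pos. assert (0 < sin x) by (apply sin_pos_in; auto).
  field. lra.
Qed.

Definition c01 := gamma 0 * (/ (2 * n + 2) * sinp (2 * n + 2) t).

Lemma HLM1 M : is_RInt_gen (fun x => gM M x * w1 x) (at_right 0) (at_point t)
   ((c01 - 0) + (sum_n_m (fun m => A1 m t) 1 M - 0)).
Proof.
  assert (P0 : is_RInt_gen (fun x => gamma 0 * sinp n x * w1 x) (at_right 0) (at_point t) (c01 - 0)).
  { apply (gen_from_deriv (fun x => gamma 0 * (/ (2 * n + 2) * sinp (2 * n + 2) x))); auto.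
    - intros x Hx. replace (gamma 0 * sinp n x * w1 x) with
        (gamma 0 * (/ (2 * n + 2) * ((2 * n + 2) * sinp (2 * n + 2 - 1) x * cos x))).
      apply is_derive_scal. apply is_derive_scal. now apply sinp_derive.
      unfold w1. replace (2 * n + 2 - 1) with (n + (n + 1)) by ring. rewrite sinp_plus. field. lra.
    - intros x Hx. apply cont_mult_R. apply cont_mult_R. apply continuous_const. now apply sinp_cont. now apply w1_cont.
    - apply lim0_scal; [apply (@filter_filter _ _ (at_right_proper_filter 0))|].
      apply lim0_scal; [apply (@filter_filter _ _ (at_right_proper_filter 0))|].
      apply sinp_lim0. lra. }
  assert (Ps : is_RInt_gen (fun x => sum_n_m (fun m => T m x * w1 x) 1 M) (at_right 0) (at_point t)
                 (sum_n_m (fun m => A1 m t) 1 M - 0)).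
  { apply (gen_from_deriv (fun x => sum_n_m (fun m => A1 m x) 1 M)); auto.
    - intros x Hx. apply (sum_deriv A1 (fun m x => T m x * w1 x)). intros m. now apply A1_der.
    - intros x Hx. apply (sum_cont (fun m x => T m x * w1 x)). intros m.
      apply cont_mult_R. now apply T_cont. now apply w1_cont.
    - apply sum_lim0. apply A1_lim. }
  assert (HP := is_RInt_gen_plus _ _ _ _ P0 Ps).
  revert HP. apply ext_in; auto. intros x Hx. unfold plus; simpl.
  rewrite sum_mult_r. unfold gM. ring.
Qed.

Variable I : R.
Hypothesis HI : is_RInt_gen (sinp (2 * n + 1)) (at_right 0) (at_point t) I.

Lemma HLM2 M : is_RInt_gen (fun x => gM M x * w2 x) (at_right 0) (at_point t)
   (gamma 0 * I + (sum_n_m (fun m => A2 m t) 1 M - 0)).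
Proof.
  assert (P0 := is_RInt_gen_scal _ (gamma 0) _ HI).
  assert (Ps : is_RInt_gen (fun x => sum_n_m (fun m => T m x * w2 x) 1 M) (at_right 0) (at_point t)
                 (sum_n_m (fun m => A2 m t) 1 M - 0)).
  { apply (gen_from_deriv (fun x => sum_n_m (fun m => A2 m x) 1 M)); auto.
    - intros x Hx. apply (sum_deriv A2 (fun m x => T m x * w2 x)). intros m. now apply A2_der.
    - intros x Hx. apply (sum_cont (fun m x => T m x * w2 x)). intros m.
      apply cont_mult_R. now apply T_cont. now apply w2_cont.
    - apply sum_lim0. apply A2_lim. }
  assert (HP := is_RInt_gen_plus _ _ _ _ P0 Ps).
  replace (gamma 0 * I + (sum_n_m (fun m => A2 m t) 1 M - 0))
    with (plus (scal (gamma 0) I) (sum_n_m (fun m => A2 m t) 1 M - 0)) by reflexivity.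
  revert HP. apply ext_in; auto. intros x Hx. unfold plus, scal; simpl; unfold mult; simpl.
  rewrite sum_mult_r. unfold gM, w2. replace (2 * n + 1) with (n + (n + 1)) by ring. rewrite sinp_plus. ring.
Qed.

Lemma sp21_cont x : 0 < x < PI -> continuous (sinp (2 * n + 1)) x.
Proof. apply sinp_cont. Qed.

Lemma I_pos : 0 <= I.
Proof.
  eapply Rle_trans; [|apply (le_gen_pt (sinp (2 * n + 1)) I (t/2) t); auto; try lra].
  - apply RInt_ge_0. lra. apply exRc. intros z Hz. apply sinp_cont.
    unfold Rmin, Rmax in Hz. destruct (Rle_dec (t/2) t); lra.
    intros; left; apply sinp_pos.
  - apply sp21_cont.
  - intros; left; apply sinp_pos.
Qed.

Lemma Kb (w : R -> R) : (forall x, 0 < x < PI -> continuous w x) ->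
  (forall x, 0 < x < PI -> w x ^ 2 / sin x <= sinp (2 * n + 1) x) ->
  forall a, 0 < a < t -> RInt (fun x => w x ^ 2 / sin x) a t <= I.
Proof.
  intros Hc Hle a Ha.
  assert (Hin : forall z, Rmin a t <= z <= Rmax a t -> 0 < z < PI)
    by (intros z Hz; unfold Rmin, Rmax in Hz; destruct (Rle_dec a t); lra).
  eapply Rle_trans. apply RInt_le. lra.
  - apply exRc. intros z Hz. assert (Hz' := Hin z Hz). apply cont_mult_R. simpl. apply cont_mult_R. auto.
    apply cont_mult_R. auto. apply continuous_const. apply cont_inv_R. apply cont_sin.
    generalize (sin_pos_in z Hz'); lra.
  - apply exRc. intros z Hz. apply sinp_cont. auto.
  - intros x Hx. apply Hle. lra.
  - apply le_gen_pt; auto; try lra. apply sp21_cont. intros; left; apply sinp_pos.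
Qed.

Lemma sq_eq x : 0 < x < PI -> sinp (n + 1) x ^ 2 = sinp (2 * n + 1) x * sin x.
Proof.
  intros Hx. simpl. rewrite Rmult_1_r. rewrite <- sinp_plus.
  replace (n + 1 + (n + 1)) with ((2 * n + 1) + 1) by ring. apply sp_split; auto.
Qed.

Lemma w1_le x : 0 < x < PI -> w1 x ^ 2 / sin x <= sinp (2 * n + 1) x.
Proof.
  intros Hx. unfold w1. assert (Hs := sin_pos_in x Hx).
  rewrite Rpow_mult_distr, sq_eq by auto.
  replace (sinp (2 * n + 1) x * sin x * cos x ^ 2 / sin x) with (sinp (2 * n + 1) x * cos x ^ 2) by (field; lra).
  assert (0 < sinp (2 * n + 1) x) by apply sinp_pos. generalize (COS_bound x). intros.
  assert (Hc2 : cos x ^ 2 <= 1) by nra.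
  rewrite <- (Rmult_1_r (sinp (2 * n + 1) x)) at 2. apply Rmult_le_compat_l; lra.
Qed.

Lemma w2_le x : 0 < x < PI -> w2 x ^ 2 / sin x <= sinp (2 * n + 1) x.
Proof.
  intros Hx. unfold w2. assert (Hs := sin_pos_in x Hx).
  rewrite sq_eq by auto. right. field. lra.
Qed.

End AtT.
End Main.

Theorem theorem5p8 (n : R) (r : R -> R) (gamma : nat -> R) :
  -1 < n < 1 ->
  in_W r ->
  L2sin (fun t => astig r t / sinp (n + 2) t) ->
  L2sin_lim
    (fun M t => gamma 0%nat * sinp n t
                + sum_n_m (fun m => gamma m * FerrersP (- n) (n + INR m) (cos t)) 1 M)
    (fun t => astig r t / sinp (n + 2) t) ->
  let C1 := r1 r 0 in
  let C2 := r 0 - r1 r 0 in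
  forall t : R, 0 < t < PI ->
    ex_series (fun m => gamma (S m) *
        (FerrersP (- (n + 2)) (n + INR (S m)) (cos t)
         + cot t * FerrersP (- (n + 1)) (n + INR (S m)) (cos t))) /\
    r1 r t = C1 + gamma 0%nat / (2 * (n + 1)) * sinp (2 * n + 2) t
             + sinp (n + 2) t * Series (fun m => gamma (S m) *
                 (FerrersP (- (n + 2)) (n + INR (S m)) (cos t)
                  + cot t * FerrersP (- (n + 1)) (n + INR (S m)) (cos t))) /\
    ex_series (fun m => gamma (S m) * FerrersP (- (n + 2)) (n + INR (S m)) (cos t)) /\
    r t = C2 * cos t + C1
          + gamma 0%nat * (sinp (2 * n + 2) t / (2 * (n + 1))
               - cos t * RInt_gen (fun u => sinp (2 * n + 1) u) (at_right 0) (at_point t))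
          + sinp (n + 2) t * Series (fun m => gamma (S m) * FerrersP (- (n + 2)) (n + INR (S m)) (cos t)).
Proof.
  intros Hn HW _ HL2 C1 C2 t Ht. unfold C1, C2. clear C1 C2.
  destruct (sinI_exists n t ltac:(lra) Ht) as [I HI].
  assert (HL2' : L2sin_lim (gM n gamma) (fA n r)) by exact HL2.
  assert (HIp := I_pos n t Ht I HI).
  assert (Lim1 := tbt (fA n r) (gM n gamma) (w1 n) t _ I _ Ht (fA_cont n r HW) (gM_cont n gamma Hn)
     (w1_cont n) HIp (Kb n t Ht I HI (w1 n) (w1_cont n) (w1_le n)) HL2' (Lf1 n r HW t Ht) (HLM1 n gamma Hn t Ht)).
  assert (Lim2 := tbt (fA n r) (gM n gamma) (w2 n) t _ I _ Ht (fA_cont n r HW) (gM_cont n gamma Hn)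
     (w2_cont n) HIp (Kb n t Ht I HI (w2 n) (w2_cont n) (w2_le n)) HL2' (Lf2 n r HW t Ht) (HLM2 n gamma Hn t Ht I HI)).
  assert (Ser1 : is_series (fun k => A1 n gamma (S k) t) (F1 r t - r1 r 0 - c01 n gamma t)).
  { apply (lim_to_series (fun m => A1 n gamma m t)). revert Lim1. apply is_lim_seq_ext. intros M. ring. }
  assert (Ser2 : is_series (fun k => A2 n gamma (S k) t) (F2 r t - D2 r 0 - gamma 0%nat * I)).
  { apply (lim_to_series (fun m => A2 n gamma m t)). revert Lim2. apply is_lim_seq_ext. intros M. ring. }
  set (S1 := F1 r t - r1 r 0 - c01 n gamma t) in *.
  set (S2 := F2 r t - D2 r 0 - gamma 0%nat * I) in *.
  assert (Hs := sin_pos_in t Ht).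
  assert (Hsp1 : 0 < sinp (n + 1) t) by apply sinp_pos.
  assert (Esp : sinp (n + 2) t = sinp (n + 1) t * sin t).
  { replace (n + 2) with ((n + 1) + 1) by ring. apply sp_split; auto. }
  assert (Hsp2 : 0 < sinp (n + 2) t) by apply sinp_pos.
  set (u1 := fun m => gamma (S m) *
        (FerrersP (- (n + 2)) (n + INR (S m)) (cos t)
         + cot t * FerrersP (- (n + 1)) (n + INR (S m)) (cos t))).
  set (u3 := fun m => gamma (S m) * FerrersP (- (n + 2)) (n + INR (S m)) (cos t)).
  assert (Su1 : is_series u1 (/ sinp (n + 2) t * S1)).
  { assert (H := is_series_scal_l (/ sinp (n + 2) t) _ _ Ser1).
    revert H. apply is_series_ext. intros k. unfold u1, A1, scal; simpl; unfold mult; simpl.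
    rewrite <- (Q_eq (n + 2) _ t Ht), <- (Q_eq (n + 1) _ t Ht). rewrite Esp. unfold cot. field. lra. }
  assert (Su3 : is_series u3 (/ sinp (n + 2) t * (S1 - cos t * S2))).
  { assert (H := is_series_scal_l (/ sinp (n + 2) t) _ _
       (is_series_minus _ _ _ _ Ser1 (is_series_scal_l (cos t) _ _ Ser2))).
    replace (/ sinp (n + 2) t * (S1 - cos t * S2)) with (scal (/ sinp (n + 2) t) (plus S1 (opp (scal (cos t) S2))))
      by (unfold scal, plus, opp; simpl; unfold mult; simpl; ring).
    revert H. apply is_series_ext. intros k. unfold u3, A1, A2, scal, plus, opp; simpl; unfold mult; simpl.
    rewrite <- (Q_eq (n + 2) _ t Ht). rewrite Esp. field. lra. }
  assert (EI : RInt_gen (fun u => sinp (2 * n + 1) u) (at_right 0) (at_point t) = I).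
  { apply (is_RInt_gen_unique (V := R_CompleteNormedModule) (Fa := at_right 0) (Fb := at_point t)).
    exact HI. }
  assert (E1 := is_series_unique _ _ Su1). assert (E3 := is_series_unique _ _ Su3).
  rewrite E1, E3, EI.
  split; [exists (/ sinp (n + 2) t * S1); exact Su1|].
  split.
  { rewrite r1_F1 by auto. unfold S1, c01. field. split; lra. }
  split; [exists (/ sinp (n + 2) t * (S1 - cos t * S2)); exact Su3|].
  rewrite (C1_eq r).
  assert (Er : r t = F1 r t - cos t * F2 r t).
  { unfold F1, F2, cot. field. lra. }
  rewrite Er. unfold S1, S2, c01. rewrite (C1_eq r). field. split; lra.
Qed.
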